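(* Let $T\in\mathcal{T}_h^\Gamma$ and $r_T=|L_T|$. For every polynomial $v\in\mathbb{P}^k(T)$ (extended polynomially to $\mathbb{R}^2$) and $j=0,1$, $$h_T^j\|D^jv\|_{L^\infty(T)}\le C\,h_T^k\sum_{\ell=0}^k\frac{1}{r_T^{\ell}}\max_{0\le i\le\ell}\big|D_{\eta}^{k-\ell}v(x_i^{\ell,T})\big|,$$ where $C$ depends only on the shape regularity of $T$, on $k$, and on the regularity of $\Gamma$.
   Context: $\Omega\subset\mathbb{R}^2$ is a polygonal domain containing a smooth closed curve $\Gamma$ enclosing the open set $\Omega^-$; $\Omega^+=\Omega\setminus\overline{\Omega^-}$. $\mathcal{T}_h$ is a shape-regular, quasi-uniform triangulation of $\Omega$, $h_T=\operatorname{diam}T$, and $k\ge1$ is an integer. Standing assumption: $\Gamma$ meets the boundary of each triangle in at most two points, and if in exactly two points they lie on different edges. $\mathcal{T}_h^\Gamma$ is the set of $T\in\mathcal{T}_h$ with $T\cap\Gamma\ne\emptyset$. For $T\in\mathcal{T}_h^\Gamma$: $y_T,z_T$ are the two endpoints of $T\cap\Gamma$, $L_T$ is the segment joining them, $T^\pm=T\cap\Omega^\pm$, $\eta$ is the unit vector perpendicular to $L_T$ pointing out of $T^-$, and $\tau$ is $\eta$ rotated by $90^\circ$ counterclockwise; $D_\eta$ denotes the directional derivative in direction $\eta$. For $\ell=0,\dots,k$, $\{\bar x_i^{\ell,T}\}_{i=0}^{\ell}$ are the $\ell+1$ Gauss–Legendre points of the segment $L_T$, and $x_i^{\ell,T}$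 is the intersection of $\Gamma$ with the line through $\bar x_i^{\ell,T}$ perpendicular to $L_T$. *)

(* Defs.v *)
From Stdlib Require Import Reals Lra.
Open Scope R_scope.

Definition pt := (R * R)%type.
Definition padd (p q : pt) : pt := (fst p + fst q, snd p + snd q).
Definition psub (p q : pt) : pt := (fst p - fst q, snd p - snd q).
Definition pscale (t : R) (p : pt) : pt := (t * fst p, t * snd p).
Definition pdot (p q : pt) : R := fst p * fst q + snd p * snd q.
Definition pnorm (p : pt) : R := sqrt (pdot p p).
Definition pdist (p q : pt) : R := pnorm (psub p q).

Definition cross (p q : pt) : R := fst p * snd q - snd p * fst q.
Definition nondegenerate (a b c : pt) : Prop := cross (psub b a) (psub c a) <> 0.

Definition in_tri (a b c p : pt) : Prop :=
  exists l1 l2 l3 : R, 0 <= l1 /\ 0 <= l2 /\ 0 <= l3 /\ l1 + l2 + l3 = 1 /\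
    p = padd (pscale l1 a) (padd (pscale l2 b) (pscale l3 c)).

Definition in_seg (p q x : pt) : Prop :=
  exists t : R, 0 <= t <= 1 /\ x = padd p (pscale t (psub q p)).

Definition on_bdry (a b c x : pt) : Prop :=
  in_seg a b x \/ in_seg b c x \/ in_seg c a x.

Definition same_edge (a b c x y : pt) : Prop :=
  (in_seg a b x /\ in_seg a b y) \/ (in_seg b c x /\ in_seg b c y) \/
  (in_seg c a x /\ in_seg c a y).

(** h_T = diam T (= longest edge) *)
Definition diamT (a b c : pt) : R := Rmax (pdist a b) (Rmax (pdist b c) (pdist c a)).

(** inradius rho_T = 2 |T| / perimeter *)
Definition inradius (a b c : pt) : R :=
  Rabs (cross (psub b a) (psub c a)) / (pdist a b + pdist b c + pdist c a).

Definition shape_reg (sigma : R) (a b c : pt) : Prop :=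
  diamT a b c <= sigma * inradius a b c.

Definition smooth (f : R -> R) : Prop :=
  exists D : nat -> R -> R, D 0%nat = f /\
    forall (n : nat) (x : R), derivable_pt_lim (D n) x (D (S n) x).

(** gamma is a C^infinity, regular, 1-periodic curve, injective on [0,1):
    a smooth simple closed curve Gamma = gamma([0,1]). *)
Definition smooth_closed_curve (g1 g2 : R -> R) : Prop :=
  smooth g1 /\ smooth g2 /\
  (forall s, g1 (s + 1) = g1 s /\ g2 (s + 1) = g2 s) /\
  (forall s d1 d2, derivable_pt_lim g1 s d1 -> derivable_pt_lim g2 s d2 ->
      (d1, d2) <> (0, 0)) /\
  (forall s t, 0 <= s < 1 -> 0 <= t < 1 -> g1 s = g1 t -> g2 s = g2 t -> s = t).

Definition on_curve (g1 g2 : R -> R) (x : pt) : Prop :=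
  exists s : R, x = (g1 s, g2 s).

(** Legendre polynomials via Bonnet's recursion:
    P_0 = 1, P_1 = x, (n+2) P_(n+2) = (2n+3) x P_(n+1) - (n+1) P_n. *)
Fixpoint legendre_pair (n : nat) (x : R) : R * R :=
  (* returns (P_n x, P_(n+1) x) *)
  match n with
  | O => (1, x)
  | S m => let (p, q) := legendre_pair m x in
           (q, ((2 * INR m + 3) * x * q - (INR m + 1) * p) / (INR m + 2))
  end.
Definition legendre (n : nat) (x : R) : R := fst (legendre_pair n x).

(** g : 'I_(l+1) -> R (as nat -> R) lists the l+1 Gauss--Legendre nodes
    on [-1,1] (the roots of P_(l+1)), in increasing order. *)
Definition GL_nodes (l : nat) (g : nat -> R) : Prop :=
  (forall i, (i <= l)%nat -> legendre (S l) (g i) = 0) /\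
  (forall i j, (i < j <= l)%nat -> g i < g j).

Definition GL_point (y z : pt) (t : R) : pt :=
  padd y (pscale ((1 + t) / 2) (psub z y)).

(** A bivariate polynomial is given by its coefficients: c a b is the
    coefficient of x^a y^b.  It lies in P^k iff c a b = 0 when a + b > k. *)
Definition poly2 := nat -> nat -> R.

Definition deg_le (k : nat) (c : poly2) : Prop :=
  forall a b : nat, (k < a + b)%nat -> c a b = 0.

(** evaluation (all monomials with a, b <= k; enough for degree <= k) *)
Definition peval (k : nat) (c : poly2) (p : pt) : R :=
  sum_f_R0 (fun a => sum_f_R0 (fun b => c a b * fst p ^ a * snd p ^ b) k) k.

Definition pdx (c : poly2) : poly2 := fun a b => INR (S a) * c (S a) b.
Definition pdy (c : poly2) : poly2 := fun a b => INR (S b) * c a (S b).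

Definition pdir (e : pt) (c : poly2) : poly2 :=
  fun a b => fst e * pdx c a b + snd e * pdy c a b.
Definition pdirn (m : nat) (e : pt) (c : poly2) : poly2 := Nat.iter m (pdir e) c.

Definition gradnorm (k : nat) (c : poly2) (p : pt) : R :=
  sqrt (peval k (pdx c) p ^ 2 + peval k (pdy c) p ^ 2).

Fixpoint fmax (n : nat) (f : nat -> R) : R :=
  match n with
  | O => f O
  | S m => Rmax (fmax m f) (f (S m))
  end.

(* Main.v *)
Require Import Defs.
From Stdlib Require Import Reals Lra Lia Arith Factorial FunctionalExtensionality ZArith Classical.
Open Scope R_scope.

Lemma sum_reindex (F G : nat -> R) (k : nat) :
  (0 < k)%nat -> F 0%nat = 0 -> G k = 0 -> (forall a, (a < k)%nat -> F (S a) = G a) ->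
  sum_f_R0 F k = sum_f_R0 G k.
Proof.
  intros Hk H0 Hk' HFG.
  rewrite decomp_sum by lia. rewrite H0, Rplus_0_l.
  destruct k as [|k]; [lia|]. simpl pred.
  rewrite tech5, Hk', Rplus_0_r.
  apply sum_eq. intros i Hi. apply HFG. lia.
Qed.

Lemma derivable_pt_lim_sum (f f' : nat -> R -> R) (n : nat) (x : R) :
  (forall i, (i <= n)%nat -> derivable_pt_lim (f i) x (f' i x)) ->
  derivable_pt_lim (fun x => sum_f_R0 (fun i => f i x) n) x (sum_f_R0 (fun i => f' i x) n).
Proof.
  induction n as [|n IH]; intros H; simpl.
  - apply H. lia.
  - apply (derivable_pt_lim_plus (fun x => sum_f_R0 (fun i => f i x) n) (f (S n))).
    + apply IH. intros; apply H; lia.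
    + apply H; lia.
Qed.

Lemma dpow_aff (q w : R) (n : nat) (x : R) :
  derivable_pt_lim (fun x => (q + x * w) ^ n) x (INR n * (q + x * w) ^ pred n * w).
Proof.
  change (fun x => (q + x * w) ^ n) with (comp (fun y => y ^ n) (fun x => q + x * w)).
  apply derivable_pt_lim_comp.
  - pose proof (derivable_pt_lim_mult (fun x => x) (fun _ => w) x 1 0 (derivable_pt_lim_id x)
         (derivable_pt_lim_const w x)) as H1.
    unfold mult_fct in H1; cbv beta in H1.
    pose proof (derivable_pt_lim_plus (fun _ => q) (fun x => x * w) x 0 _
      (derivable_pt_lim_const q x) H1) as H.
    unfold plus_fct in H; cbv beta in H.
    replace (0 + (1 * w + x * 0)) with w in H by ring. exact H.
  - apply derivable_pt_lim_pow.
Qed.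

Lemma dl_eq (f : R -> R) x l l' : derivable_pt_lim f x l -> l = l' -> derivable_pt_lim f x l'.
Proof. intros H ->; exact H. Qed.

Lemma sum_zero (f : nat -> R) n : (forall i, (i <= n)%nat -> f i = 0) -> sum_f_R0 f n = 0.
Proof.
  intros H. induction n as [|n IH]; simpl.
  - apply H; lia.
  - rewrite IH, H; [ring|lia|]. intros; apply H; lia.
Qed.

Lemma deriv_sum_eq k (c : poly2) w1 w2 X Y : (0 < k)%nat -> deg_le k c ->
  sum_f_R0 (fun a => sum_f_R0 (fun b =>
    c a b * (INR a * X ^ pred a * w1) * Y ^ b + c a b * X ^ a * (INR b * Y ^ pred b * w2)) k) k
  = sum_f_R0 (fun a => sum_f_R0 (fun b =>
    (w1 * (INR (S a) * c (S a) b) + w2 * (INR (S b) * c a (S b))) * X ^ a * Y ^ b) k) k.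
Proof.
  intros Hk Hd.
  transitivity (sum_f_R0 (fun a => sum_f_R0 (fun b => c a b * (INR a * X ^ pred a * w1) * Y ^ b) k) k
     + sum_f_R0 (fun a => sum_f_R0 (fun b => c a b * X ^ a * (INR b * Y ^ pred b * w2)) k) k).
  { rewrite <- plus_sum. apply sum_eq; intros a _. apply plus_sum. }
  transitivity (sum_f_R0 (fun a => sum_f_R0 (fun b => w1 * (INR (S a) * c (S a) b) * X ^ a * Y ^ b) k) k
     + sum_f_R0 (fun a => sum_f_R0 (fun b => w2 * (INR (S b) * c a (S b)) * X ^ a * Y ^ b) k) k).
  2:{ rewrite <- plus_sum. apply sum_eq; intros a _. rewrite <- plus_sum. apply sum_eq; intros b _. ring. }
  f_equal.
  - apply sum_reindex; auto.
    + apply sum_zero; intros b _. simpl. ring.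
    + apply sum_zero; intros b _. rewrite (Hd (S k) b) by lia. ring.
    + intros a Ha. apply sum_eq; intros b _. simpl pred. ring.
  - apply sum_eq; intros a _. apply sum_reindex; auto.
    + simpl. ring.
    + rewrite (Hd a (S k)) by lia. ring.
    + intros b Hb. simpl pred. ring.
Qed.

Lemma peval_deriv (k : nat) (c : poly2) (q w : pt) (x : R) :
  (0 < k)%nat -> deg_le k c ->
  derivable_pt_lim (fun x => peval k c (padd q (pscale x w))) x
    (peval k (pdir w c) (padd q (pscale x w))).
Proof.
  intros Hk Hd. unfold peval, padd, pscale; simpl.
  eapply dl_eq.
  - apply (derivable_pt_lim_sum
      (fun a x => sum_f_R0 (fun b => c a b * (fst q + x * fst w) ^ a * (snd q + x * snd w) ^ b) k)
      (fun a x => sum_f_R0 (fun b =>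
         c a b * (INR a * (fst q + x * fst w) ^ pred a * fst w) * (snd q + x * snd w) ^ b +
         c a b * (fst q + x * fst w) ^ a * (INR b * (snd q + x * snd w) ^ pred b * snd w)) k)).
    intros a _.
    apply (derivable_pt_lim_sum
      (fun b x => c a b * (fst q + x * fst w) ^ a * (snd q + x * snd w) ^ b)
      (fun b x => c a b * (INR a * (fst q + x * fst w) ^ pred a * fst w) * (snd q + x * snd w) ^ b +
         c a b * (fst q + x * fst w) ^ a * (INR b * (snd q + x * snd w) ^ pred b * snd w))).
    intros b _.
    pose proof (derivable_pt_lim_mult (fun x => c a b * (fst q + x * fst w) ^ a)
       (fun x => (snd q + x * snd w) ^ b) x _ _
       (derivable_pt_lim_scal (fun x => (fst q + x * fst w) ^ a) (c a b) x _ (dpow_aff _ _ a x))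
       (dpow_aff _ _ b x)) as H.
    unfold mult_fct, mult_real_fct in H; cbv beta in H.
    eapply dl_eq; [exact H|]. ring.
  - unfold pdir, pdx, pdy; simpl.
    apply deriv_sum_eq; assumption.
Qed.

Lemma const_of_zero_deriv (g : R -> R) :
  (forall x, derivable_pt_lim g x 0) -> forall x, g x = g 0.
Proof.
  intros H x. destruct (Rtotal_order x 0) as [Hx|[Hx|Hx]].
  - destruct (MVT_cor2 g (fun _ => 0) x 0 Hx (fun c _ => H c)) as [c [Hc _]]. lra.
  - subst; reflexivity.
  - destruct (MVT_cor2 g (fun _ => 0) 0 x Hx (fun c _ => H c)) as [c [Hc _]]. lra.
Qed.

Lemma taylor0 (n : nat) : forall (f : nat -> R -> R),
  (forall j x, derivable_pt_lim (f j) x (f (S j) x)) -> (forall x, f (S n) x = 0) ->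
  forall x, f 0%nat x = sum_f_R0 (fun j => f j 0 / INR (fact j) * x ^ j) n.
Proof.
  induction n as [|n IH]; intros f Hd Hz x.
  - simpl. assert (Hc : forall x, derivable_pt_lim (f 0%nat) x 0).
    { intros y. eapply dl_eq; [apply Hd|apply Hz]. }
    rewrite (const_of_zero_deriv _ Hc x). field.
  - pose proof (IH (fun j => f (S j)) (fun j x => Hd (S j) x) Hz) as IH'.
    set (g := fun x => f 0%nat x - sum_f_R0 (fun j => f j 0 / INR (fact j) * x ^ j) (S n)).
    assert (Hg : forall x, derivable_pt_lim g x 0).
    { intros y. unfold g.
      eapply dl_eq.
      - apply derivable_pt_lim_minus. apply Hd.
        apply (derivable_pt_lim_sum (fun j x => f j 0 / INR (fact j) * x ^ j)
                 (fun j x => f j 0 / INR (fact j) * (INR j * x ^ pred j))).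
        intros j _. apply derivable_pt_lim_scal. apply derivable_pt_lim_pow.
      - rewrite IH'. rewrite (decomp_sum _ (S n)) by lia. simpl pred.
        replace (f 0%nat 0 / INR (fact 0) * (INR 0 * y ^ 0)) with 0 by (simpl; field).
        rewrite Rplus_0_l. apply Rminus_diag_eq.
        apply sum_eq; intros j _. rewrite fact_simpl, mult_INR. simpl pred.
        field. split; [apply INR_fact_neq_0|apply not_0_INR; lia]. }
    assert (Hx := const_of_zero_deriv g Hg x). unfold g in Hx.
    assert (H0 : sum_f_R0 (fun j => f j 0 / INR (fact j) * 0 ^ j) (S n) = f 0%nat 0).
    { rewrite decomp_sum by lia. rewrite sum_zero.
      - simpl; field.
      - intros i _. simpl. ring. }
    rewrite H0 in Hx. lra.
Qed.

Definition pzero (c : poly2) : Prop := forall a b, c a b = 0.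

Lemma deg_pdir n e c : deg_le (S n) c -> deg_le n (pdir e c).
Proof. intros H a b Hab. unfold pdir, pdx, pdy. rewrite !H by lia. ring. Qed.

Lemma deg_pdir0 e c : deg_le 0 c -> pzero (pdir e c).
Proof. intros H a b. unfold pdir, pdx, pdy. rewrite !H by lia. ring. Qed.

Lemma pzero_pdir e c : pzero c -> pzero (pdir e c).
Proof. intros H a b. unfold pdir, pdx, pdy. rewrite !H. ring. Qed.

Lemma pzero_deg n c : pzero c -> deg_le n c.
Proof. intros H a b _; apply H. Qed.

Lemma deg_le_mono n m c : (n <= m)%nat -> deg_le n c -> deg_le m c.
Proof. intros Hnm H a b Hab; apply H; lia. Qed.

Lemma pdirn_S j e c : pdirn (S j) e c = pdir e (pdirn j e c).
Proof. reflexivity. Qed.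

Lemma deg_pdirn n e c : deg_le n c -> forall j, (j <= n)%nat -> deg_le (n - j) (pdirn j e c).
Proof.
  intros H j. induction j as [|j IH]; intros Hj.
  - simpl. replace (n - 0)%nat with n by lia. exact H.
  - rewrite pdirn_S. apply deg_pdir. replace (S (n - S j)) with (n - j)%nat by lia. apply IH; lia.
Qed.

Lemma pzero_pdirn n e c : deg_le n c -> forall j, (n < j)%nat -> pzero (pdirn j e c).
Proof.
  intros H j Hj. induction j as [|j IH]; [lia|].
  rewrite pdirn_S. destruct (Nat.eq_dec j n) as [->|Hne].
  - apply deg_pdir0. replace 0%nat with (n - n)%nat by lia. apply deg_pdirn; auto.
  - apply pzero_pdir, IH. lia.
Qed.

Lemma deg_pdirn_k k e c : deg_le k c -> forall j, deg_le k (pdirn j e c).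
Proof.
  intros H j. destruct (le_lt_dec j k) as [Hj|Hj].
  - apply (deg_le_mono (k - j)); [lia|]. apply deg_pdirn; auto.
  - apply pzero_deg, (pzero_pdirn k); auto.
Qed.

Lemma peval_pzero k c p : pzero c -> peval k c p = 0.
Proof. intros H. unfold peval. apply sum_zero; intros a _. apply sum_zero; intros b _. rewrite H; ring. Qed.

Lemma peval_ext k c d p : (forall a b, c a b = d a b) -> peval k c p = peval k d p.
Proof. intros H. unfold peval. apply sum_eq; intros a _. apply sum_eq; intros b _. rewrite H; ring. Qed.

Lemma sum_lin (f g : nat -> R) al be n :
  sum_f_R0 (fun i => al * f i + be * g i) n = al * sum_f_R0 f n + be * sum_f_R0 g n.
Proof. induction n as [|n IH]; simpl; [ring|rewrite IH; ring]. Qed.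

Lemma peval_pdir k e c p :
  peval k (pdir e c) p = fst e * peval k (pdx c) p + snd e * peval k (pdy c) p.
Proof.
  unfold peval. rewrite <- sum_lin. apply sum_eq; intros a _.
  rewrite <- sum_lin. apply sum_eq; intros b _. unfold pdir. ring.
Qed.

Lemma taylor_line k c q w x : (0 < k)%nat -> deg_le k c ->
  peval k c (padd q (pscale x w)) =
  sum_f_R0 (fun j => peval k (pdirn j w c) q / INR (fact j) * x ^ j) k.
Proof.
  intros Hk Hd.
  pose (f := fun j x => peval k (pdirn j w c) (padd q (pscale x w))).
  assert (Hq : padd q (pscale 0 w) = q).
  { unfold padd, pscale. destruct q; simpl; f_equal; ring. }
  transitivity (f 0%nat x); [reflexivity|].
  rewrite (taylor0 k f).
  - apply sum_eq; intros j _. unfold f. rewrite Hq. reflexivity.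
  - intros j y. unfold f. rewrite pdirn_S. apply peval_deriv; auto. apply deg_pdirn_k; auto.
  - intros y. unfold f. apply peval_pzero. apply (pzero_pdirn k); auto.
Qed.

Lemma pdir_comm e w c : pdir e (pdir w c) = pdir w (pdir e c).
Proof.
  apply functional_extensionality; intro a; apply functional_extensionality; intro b.
  unfold pdir, pdx, pdy. ring.
Qed.

Lemma pdirn_comm j e w c : pdirn j w (pdir e c) = pdir e (pdirn j w c).
Proof.
  induction j as [|j IH]; [reflexivity|]. rewrite !pdirn_S, IH. apply pdir_comm.
Qed.

Lemma pdirn_add p q e c : pdirn p e (pdirn q e c) = pdirn (p + q) e c.
Proof. unfold pdirn. rewrite Nat.iter_add. reflexivity. Qed.

Lemma pdirn_Sr p e c : pdirn p e (pdir e c) = pdirn (S p) e c.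
Proof. unfold pdirn. rewrite Nat.iter_succ_r. reflexivity. Qed.


Definition E (n : nat) (a : nat -> R) (t : R) : R := sum_f_R0 (fun p => a p * t ^ p) n.

Lemma E_S n a t : E (S n) a t = a 0%nat + t * E n (fun p => a (S p)) t.
Proof.
  induction n as [|n IH].
  - unfold E; simpl; ring.
  - unfold E in *. rewrite tech5, IH, (tech5 _ n). simpl. ring.
Qed.

Lemma E_0 n a : E n a 0 = a 0%nat.
Proof.
  induction n as [|n IH]; [unfold E; simpl; ring|]. rewrite E_S. ring.
Qed.

Definition qt (n : nat) (a : nat -> R) (x0 : R) : nat -> R :=
  fun p => sum_f_R0 (fun q => a (S (p + q)) * x0 ^ q) (n - p).

Lemma qt_S m a x0 p : qt (S m) a x0 (S p) = qt m (fun i => a (S i)) x0 p.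
Proof. reflexivity. Qed.

Lemma qt_0 n a x0 : qt n a x0 0%nat = E n (fun i => a (S i)) x0.
Proof. unfold qt, E. rewrite Nat.sub_0_r. reflexivity. Qed.

Lemma Q1 n : forall a x0 t, E (S n) a t - E (S n) a x0 = (t - x0) * E n (qt n a x0) t.
Proof.
  induction n as [|m IH]; intros a x0 t.
  - unfold E, qt; simpl. ring.
  - rewrite (E_S (S m) a t), (E_S (S m) a x0), (E_S m (qt (S m) a x0)).
    rewrite qt_0.
    transitivity ((t - x0) * E (S m) (fun i => a (S i)) x0 +
        t * (E (S m) (fun p => a (S p)) t - E (S m) (fun p => a (S p)) x0)); [ring|].
    rewrite IH.
    change (fun p => qt (S m) a x0 (S p)) with (qt m (fun i => a (S i)) x0). ring.
Qed.

Lemma Q2 n a x0 p : (p < n)%nat -> a (S p) = qt n a x0 p - x0 * qt n a x0 (S p).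
Proof.
  intros Hp. unfold qt. rewrite (decomp_sum _ (n - p)) by lia.
  replace (pred (n - p)) with (n - S p)%nat by lia.
  rewrite Nat.add_0_r. simpl pow.
  rewrite scal_sum.
  assert (sum_f_R0 (fun i => a (S (p + S i)) * (x0 * x0 ^ i)) (n - S p) =
          sum_f_R0 (fun i => a (S (S p + i)) * x0 ^ i * x0) (n - S p)).
  { apply sum_eq; intros i _. replace (p + S i)%nat with (S p + i)%nat by lia. ring. }
  rewrite H. ring.
Qed.

Lemma Q3 n a x0 : a (S n) = qt n a x0 n.
Proof. unfold qt. rewrite Nat.sub_diag. simpl. rewrite Nat.add_0_r. ring. Qed.

Lemma Q4 n a x0 : a 0%nat = E (S n) a x0 - x0 * qt n a x0 0%nat.
Proof.
  pose proof (Q1 n a x0 0) as H. rewrite !E_0 in H. lra.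
Qed.

Lemma roots_zero n : forall (a x : nat -> R),
  (forall i j, (i <= n)%nat -> (j <= n)%nat -> i <> j -> x i <> x j) ->
  (forall i, (i <= n)%nat -> E n a (x i) = 0) -> forall p, (p <= n)%nat -> a p = 0.
Proof.
  induction n as [|n IH]; intros a x Hx Hr p Hp.
  - replace p with 0%nat by lia. pose proof (Hr 0%nat (le_n 0)) as H. unfold E in H. simpl in H. lra.
  - assert (Hq : forall p, (p <= n)%nat -> qt n a (x 0%nat) p = 0).
    { apply (IH _ (fun i => x (S i))).
      - intros i j Hi Hj Hij. apply Hx; lia.
      - intros i Hi. pose proof (Q1 n a (x 0%nat) (x (S i))) as H.
        rewrite !Hr in H by lia.
        assert (x (S i) - x 0%nat <> 0) by (apply Rminus_eq_contra, Hx; lia).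
        apply (Rmult_eq_reg_l (x (S i) - x 0%nat)); auto. lra. }
    destruct p as [|p].
    + rewrite (Q4 n a (x 0%nat)), Hr, Hq by lia. ring.
    + destruct (Nat.eq_dec p n) as [->|Hne].
      * rewrite (Q3 n a (x 0%nat)). apply Hq; lia.
      * rewrite (Q2 n a (x 0%nat) p), !Hq by lia. ring.
Qed.

Lemma gaps_mono (x : nat -> R) n d : 0 < d ->
  (forall i, (i < n)%nat -> x i + d <= x (S i)) ->
  forall i j, (i < j <= n)%nat -> x i + d <= x j.
Proof.
  intros Hd H i j. induction j as [|j IH]; intros Hij; [lia|].
  destruct (Nat.eq_dec i j) as [->|Hne].
  - apply H; lia.
  - pose proof (IH ltac:(lia)). pose proof (H j ltac:(lia)). lra.
Qed.

Lemma coef_bound n G d : 0 < d -> exists L, 0 <= L /\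
  forall (a x : nat -> R) V, (forall i, (i <= n)%nat -> Rabs (x i) <= G) ->
  (forall i, (i < n)%nat -> x i + d <= x (S i)) ->
  (forall i, (i <= n)%nat -> Rabs (E n a (x i)) <= V) ->
  forall p, (p <= n)%nat -> Rabs (a p) <= L * V.
Proof.
  intros Hd. induction n as [|n [L [HL0 IH]]].
  - exists 1. split; [lra|]. intros a x V _ _ HV p Hp.
    replace p with 0%nat by lia. specialize (HV 0%nat (le_n 0)). unfold E in HV; simpl in HV.
    rewrite Rmult_1_r in HV. lra.
  - intros. exists ((1 + Rabs G) * L * (2 / d) + 1).
    assert (Hd2 : 0 <= 2 / d) by (apply Rlt_le, Rdiv_lt_0_compat; lra).
    split.
    { pose proof (Rabs_pos G). apply Rplus_le_le_0_compat; [|lra].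
      apply Rmult_le_pos; auto. apply Rmult_le_pos; lra. }
    intros a x V Hb Hg HV p Hp.
    assert (V0 : 0 <= V) by (eapply Rle_trans; [apply Rabs_pos|apply (HV 0%nat); lia]).
    assert (G0 : 0 <= G) by (eapply Rle_trans; [apply Rabs_pos|apply (Hb 0%nat); lia]).
    set (x0 := x 0%nat).
    assert (Hgap : forall i, (i <= n)%nat -> x0 + d <= x (S i)).
    { intros i Hi. apply (gaps_mono x (S n) d); auto; lia. }
    assert (Hq : forall p, (p <= n)%nat -> Rabs (qt n a x0 p) <= L * (2 * V / d)).
    { apply (IH _ (fun i => x (S i))).
      - intros i Hi; apply Hb; lia.
      - intros i Hi; apply Hg; lia.
      - intros i Hi. pose proof (Q1 n a x0 (x (S i))) as HQ.
        pose proof (Hgap i Hi) as Hgi.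
        assert (Habs : Rabs (E n (qt n a x0) (x (S i))) * d <= 2 * V).
        { apply Rle_trans with (Rabs (E n (qt n a x0) (x (S i))) * (x (S i) - x0)).
          - apply Rmult_le_compat_l; [apply Rabs_pos|lra].
          - rewrite Rmult_comm. replace (x (S i) - x0) with (Rabs (x (S i) - x0)) at 1
              by (apply Rabs_right; lra).
            rewrite <- Rabs_mult, <- HQ.
            eapply Rle_trans; [apply Rabs_triang|]. rewrite Rabs_Ropp.
            pose proof (HV (S i) ltac:(lia)). pose proof (HV 0%nat ltac:(lia)) as H0. change (x 0%nat) with x0 in H0. lra. }
        apply (Rmult_le_reg_r d); [lra|]. unfold Rdiv. rewrite Rmult_assoc, Rinv_l, Rmult_1_r by lra.
        exact Habs. }
    set (Q := L * (2 * V / d)) in *.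
    assert (Q0 : 0 <= Q).
    { unfold Q. apply Rmult_le_pos; auto. apply Rmult_le_pos; [lra|]. apply Rlt_le, Rinv_0_lt_compat; lra. }
    assert (Hx0 : Rabs x0 <= G) by (apply Hb; lia).
    assert (HGQ : forall p, (p <= n)%nat -> Rabs (x0 * qt n a x0 p) <= G * Q).
    { intros p' Hp'. rewrite Rabs_mult. apply Rmult_le_compat; auto using Rabs_pos. }
    rewrite (Rabs_pos_eq G G0).
    replace (((1 + G) * L * (2 / d) + 1) * V) with ((1 + G) * Q + V) by (unfold Q; field; lra).
    destruct p as [|p].
    + rewrite (Q4 n a x0). unfold Rminus. eapply Rle_trans; [apply Rabs_triang|].
      rewrite Rabs_Ropp. pose proof (HV 0%nat ltac:(lia)) as H0. change (x 0%nat) with x0 in H0. pose proof (HGQ 0%nat ltac:(lia)).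
      nra.
    + destruct (Nat.eq_dec p n) as [->|Hne].
      * rewrite (Q3 n a x0). pose proof (Hq n (le_n n)). pose proof (Rmult_le_pos G Q G0 Q0). lra.
      * rewrite (Q2 n a x0 p) by lia. unfold Rminus. eapply Rle_trans; [apply Rabs_triang|].
        rewrite Rabs_Ropp. pose proof (Hq p ltac:(lia)). pose proof (HGQ (S p) ltac:(lia)). lra.
Qed.

Lemma coef_bound_upto k G d : 0 < d -> exists L, 0 <= L /\ forall n, (n <= k)%nat ->
  forall (a x : nat -> R) V, (forall i, (i <= n)%nat -> Rabs (x i) <= G) ->
  (forall i, (i < n)%nat -> x i + d <= x (S i)) ->
  (forall i, (i <= n)%nat -> Rabs (E n a (x i)) <= V) ->
  forall p, (p <= n)%nat -> Rabs (a p) <= L * V.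
Proof.
  intros Hd. induction k as [|k [L [HL IH]]].
  - destruct (coef_bound 0 G d Hd) as [L [HL H]]. exists L. split; auto.
    intros n Hn. replace n with 0%nat by lia. exact H.
  - destruct (coef_bound (S k) G d Hd) as [L' [HL' H]]. exists (L + L'). split; [lra|].
    intros n Hn a x V Hb Hg HV p Hp.
    assert (V0 : 0 <= V) by (eapply Rle_trans; [apply Rabs_pos|apply (HV 0%nat); lia]).
    destruct (Nat.eq_dec n (S k)) as [->|Hne].
    + eapply Rle_trans; [apply (H a x V Hb Hg HV p Hp)|]. nra.
    + eapply Rle_trans; [apply (IH n ltac:(lia) a x V Hb Hg HV p Hp)|]. nra.
Qed.


Definition shR (Q : nat -> R) (p : nat) : R := match p with O => 0 | S p' => Q p' end.

Fixpoint LCP (n : nat) : (nat -> R) * (nat -> R) :=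
  match n with
  | O => (fun p => match p with O => 1 | _ => 0 end, fun p => match p with 1%nat => 1 | _ => 0 end)
  | S m => let (P, Q) := LCP m in
      (Q, fun p => ((2 * INR m + 3) * shR Q p - (INR m + 1) * P p) / (INR m + 2))
  end.

Lemma E_lin n f g al be x :
  E n (fun p => (al * f p - be * g p) / (INR n + 0 + 1)) x = 0 -> True.
Proof. auto. Qed.

Lemma E_comb n (f g : nat -> R) al be de x : de <> 0 ->
  E n (fun p => (al * f p - be * g p) / de) x = (al * E n f x - be * E n g x) / de.
Proof.
  intros Hde. unfold E. induction n as [|n IH]; simpl; [field; auto|]. rewrite IH. field; auto.
Qed.

Lemma E_ext n m a x : (n <= m)%nat -> (forall p, (n < p)%nat -> a p = 0) -> E m a x = E n a x.
Proof.
  intros Hnm Ha. induction m as [|m IH].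
  - replace n with 0%nat by lia. reflexivity.
  - destruct (Nat.eq_dec n (S m)) as [->|Hne]; [reflexivity|].
    unfold E in *. rewrite tech5, IH by lia. rewrite Ha by lia. ring.
Qed.

Lemma E_shR n Q x : E (S n) (shR Q) x = x * E n Q x.
Proof. rewrite E_S. simpl. ring_simplify. unfold E. apply Rmult_eq_compat_l. reflexivity. Qed.

Lemma LCP_inv m x : let (P, Q) := LCP m in let (p, q) := legendre_pair m x in
  E m P x = p /\ E (S m) Q x = q /\ (forall i, (m < i)%nat -> P i = 0) /\
  (forall i, (S m < i)%nat -> Q i = 0).
Proof.
  induction m as [|m IH].
  - simpl. unfold E; simpl. repeat split; try ring.
    + intros i Hi. destruct i; [lia|reflexivity].
    + intros i Hi. destruct i as [|[|i]]; [lia|lia|reflexivity].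
  - simpl. destruct (LCP m) as [P Q]. destruct (legendre_pair m x) as [p q].
    destruct IH as [H1 [H2 [H3 H4]]]. repeat split; auto.
    + rewrite E_comb by (pose proof (pos_INR m); lra).
      rewrite E_shR, H2, (E_ext m (S (S m)) P x), H1 by (auto; lia). f_equal; ring.
    + intros i Hi. rewrite H3 by lia. destruct i as [|i]; [lia|]. simpl. rewrite H4 by lia.
      field. pose proof (pos_INR m); lra.
Qed.

Definition Lc (n : nat) : nat -> R := fst (LCP n).

Lemma Lc_eval n x : E n (Lc n) x = legendre n x.
Proof.
  pose proof (LCP_inv n x) as H. unfold Lc, legendre.
  destruct (LCP n) as [P Q]. destruct (legendre_pair n x) as [p q]. simpl. tauto.
Qed.

Lemma legendre_1 n : legendre n 1 = 1.
Proof.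
  assert (H : legendre_pair n 1 = (1, 1)).
  { induction n as [|n IH]; [reflexivity|]. simpl. rewrite IH. f_equal.
    field. pose proof (pos_INR n); lra. }
  unfold legendre. rewrite H. reflexivity.
Qed.

Fixpoint mg (g0 : nat -> R) (n : nat) : R :=
  match n with O => 1 | S n => Rmin (mg g0 n) (g0 (S n) - g0 n) end.

Lemma mg_pos g0 n : (forall i, (i < n)%nat -> g0 i < g0 (S i)) -> 0 < mg g0 n.
Proof.
  induction n as [|n IH]; intros H; simpl; [lra|].
  apply Rmin_glb_lt; [apply IH; intros; apply H; lia|]. pose proof (H n ltac:(lia)); lra.
Qed.

Lemma mg_le g0 n : forall i, (i < n)%nat -> g0 i + mg g0 n <= g0 (S i).
Proof.
  induction n as [|n IH]; intros i Hi; [lia|]. simpl.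
  destruct (Nat.eq_dec i n) as [->|Hne].
  - pose proof (Rmin_r (mg g0 n) (g0 (S n) - g0 n)); lra.
  - pose proof (IH i ltac:(lia)). pose proof (Rmin_l (mg g0 n) (g0 (S n) - g0 n)); lra.
Qed.

Lemma abs_le_sum (f : nat -> R) n j : (j <= n)%nat -> Rabs (f j) <= sum_f_R0 (fun i => Rabs (f i)) n.
Proof.
  induction n as [|n IH]; intros Hj.
  - replace j with 0%nat by lia. simpl. lra.
  - simpl. destruct (Nat.eq_dec j (S n)) as [->|Hne].
    + assert (0 <= sum_f_R0 (fun i => Rabs (f i)) n).
      { apply cond_pos_sum. intros; apply Rabs_pos. }
      lra.
    + pose proof (IH ltac:(lia)). pose proof (Rabs_pos (f (S n))). lra.
Qed.

Lemma GL_root_in l g0 x : GL_nodes l g0 -> legendre (S l) x = 0 ->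
  exists j, (j <= l)%nat /\ x = g0 j.
Proof.
  intros [Hr Hi] Hx. apply NNPP. intros Hn.
  set (y := fun i => match i with O => x | S i' => g0 i' end).
  assert (Hz : forall p, (p <= S l)%nat -> Lc (S l) p = 0).
  { apply (roots_zero (S l) (Lc (S l)) y).
    - intros i j Hi' Hj' Hij. destruct i as [|i], j as [|j]; simpl; try lia.
      + intros E'. apply Hn. exists j. split; [lia|auto].
      + intros E'. apply Hn. exists i. split; [lia|auto].
      + destruct (Nat.lt_total i j) as [H|[H|H]]; [|lia|].
        * pose proof (Hi i j ltac:(lia)); lra.
        * pose proof (Hi j i ltac:(lia)); lra.
    - intros i Hi'. rewrite Lc_eval. destruct i as [|i]; simpl; auto. apply Hr; lia. }
  pose proof (Lc_eval (S l) 1) as H1. rewrite legendre_1 in H1.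
  unfold E in H1. rewrite sum_zero in H1; [lra|].
  intros i Hi'. rewrite Hz by lia. ring.
Qed.

Lemma GL_unif l : exists G d, 0 < d /\ forall g, GL_nodes l g ->
  (forall i, (i <= l)%nat -> Rabs (g i) <= G) /\ (forall i, (i < l)%nat -> g i + d <= g (S i)).
Proof.
  destruct (classic (exists g0, GL_nodes l g0)) as [[g0 H0]|Hn].
  2:{ exists 0, 1. split; [lra|]. intros g Hg. exfalso. apply Hn. exists g; auto. }
  assert (Hinc : forall i, (i < l)%nat -> g0 i < g0 (S i)) by (intros; apply (proj2 H0); lia).
  exists (sum_f_R0 (fun i => Rabs (g0 i)) l), (mg g0 l). split; [apply mg_pos; auto|].
  intros g Hg. split.
  - intros i Hi. destruct (GL_root_in l g0 (g i) H0 (proj1 Hg i Hi)) as [j [Hj ->]].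
    apply abs_le_sum; auto.
  - intros i Hi. destruct (GL_root_in l g0 (g i) H0 (proj1 Hg i ltac:(lia))) as [p [Hp Ep]].
    destruct (GL_root_in l g0 (g (S i)) H0 (proj1 Hg (S i) ltac:(lia))) as [q [Hq Eq]].
    pose proof (proj2 Hg i (S i) ltac:(lia)) as Hlt. rewrite Ep, Eq in *.
    destruct (Nat.lt_total p q) as [H|[H|H]].
    + assert (Hmg : forall i j, (i < j <= l)%nat -> g0 i + mg g0 l <= g0 j).
      { apply gaps_mono; [apply mg_pos; auto|]. apply mg_le. }
      apply Hmg; lia.
    + subst; lra.
    + assert (Hs : forall i j, (i < j <= l)%nat -> g0 i < g0 j) by (intros; apply (proj2 H0); lia).
      pose proof (Hs q p ltac:(lia)). lra.
Qed.

Lemma GL_unif_upto k : exists G d, 0 < d /\ 0 <= G /\ forall l, (l <= k)%nat -> forall g, GL_nodes l g ->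
  (forall i, (i <= l)%nat -> Rabs (g i) <= G) /\ (forall i, (i < l)%nat -> g i + d <= g (S i)).
Proof.
  induction k as [|k [G [d [Hd [HG IH]]]]].
  - destruct (GL_unif 0) as [G [d [Hd H]]]. exists (Rabs G), d. split; auto. split; [apply Rabs_pos|].
    intros l Hl g Hg. replace l with 0%nat in * by lia. destruct (H g Hg) as [A B]. split; auto.
    intros i Hi. eapply Rle_trans; [apply A; auto|apply RRle_abs].
  - destruct (GL_unif (S k)) as [G' [d' [Hd' H]]]. exists (Rmax G (Rabs G')), (Rmin d d').
    split; [apply Rmin_glb_lt; auto|]. split; [eapply Rle_trans; [apply HG|apply Rmax_l]|].
    intros l Hl g Hg. destruct (Nat.eq_dec l (S k)) as [->|Hne].
    + destruct (H g Hg) as [A B]. split.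
      * intros i Hi. eapply Rle_trans; [apply A; auto|]. eapply Rle_trans; [apply RRle_abs|apply Rmax_r].
      * intros i Hi. pose proof (B i Hi). pose proof (Rmin_r d d'). lra.
    + destruct (IH l ltac:(lia) g Hg) as [A B]. split.
      * intros i Hi. eapply Rle_trans; [apply A; auto|apply Rmax_l].
      * intros i Hi. pose proof (B i Hi). pose proof (Rmin_l d d'). lra.
Qed.


Lemma Rabs_le_inv x h : Rabs x <= h -> - h <= x <= h.
Proof. intros H. pose proof (Rle_abs x). pose proof (Rle_abs (- x)). rewrite Rabs_Ropp in *. lra. Qed.

Section Tri.
Variables A B C : pt.
Let D := cross (psub B A) (psub C A).
Definition lam2 (p : pt) := cross (psub p A) (psub C A) / cross (psub B A) (psub C A).
Definition lam3 (p : pt) := cross (psub B A) (psub p A) / cross (psub B A) (psub C A).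
Definition lam1 (p : pt) := 1 - lam2 p - lam3 p.

Hypothesis HD : nondegenerate A B C.

Lemma bary_repr p : p = padd (pscale (lam1 p) A) (padd (pscale (lam2 p) B) (pscale (lam3 p) C)).
Proof.
  unfold nondegenerate in HD. unfold lam1, lam2, lam3, cross, psub, padd, pscale in *.
  destruct p as [p1 p2], A as [a1 a2], B as [b1 b2], C as [c1 c2]; simpl in *.
  f_equal; field; auto.
Qed.

Lemma in_tri_lam p : in_tri A B C p -> 0 <= lam1 p /\ 0 <= lam2 p /\ 0 <= lam3 p.
Proof.
  intros [l1 [l2 [l3 [H1 [H2 [H3 [H4 ->]]]]]]].
  assert (E2 : lam2 (padd (pscale l1 A) (padd (pscale l2 B) (pscale l3 C))) = l2).
  { unfold nondegenerate in HD. unfold lam2, cross, psub, padd, pscale in *.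
    destruct A as [a1 a2], B as [b1 b2], C as [c1 c2]; simpl in *.
    replace l1 with (1 - l2 - l3) by lra. field; auto. }
  assert (E3 : lam3 (padd (pscale l1 A) (padd (pscale l2 B) (pscale l3 C))) = l3).
  { unfold nondegenerate in HD. unfold lam3, cross, psub, padd, pscale in *.
    destruct A as [a1 a2], B as [b1 b2], C as [c1 c2]; simpl in *.
    replace l1 with (1 - l2 - l3) by lra. field; auto. }
  unfold lam1. rewrite E2, E3. lra.
Qed.

Lemma lam_in_tri p : 0 <= lam1 p -> 0 <= lam2 p -> 0 <= lam3 p -> in_tri A B C p.
Proof.
  intros H1 H2 H3. exists (lam1 p), (lam2 p), (lam3 p). repeat split; auto.
  unfold lam1; ring. apply bary_repr.
Qed.

Lemma lam_bdry p : 0 <= lam1 p -> 0 <= lam2 p -> 0 <= lam3 p ->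
  (lam1 p = 0 \/ lam2 p = 0 \/ lam3 p = 0) -> on_bdry A B C p.
Proof.
  intros H1 H2 H3 H. pose proof (bary_repr p) as Hp.
  assert (Hs : lam1 p + lam2 p + lam3 p = 1) by (unfold lam1; ring).
  destruct H as [H|[H|H]].
  - right; left. exists (lam3 p). split; [lra|]. rewrite Hp at 1.
    unfold padd, pscale, psub; simpl. rewrite H. f_equal; replace (lam2 p) with (1 - lam3 p) by lra; ring.
  - right; right. exists (lam1 p). split; [lra|]. rewrite Hp at 1.
    unfold padd, pscale, psub; simpl. rewrite H. f_equal; replace (lam3 p) with (1 - lam1 p) by lra; ring.
  - left. exists (lam2 p). split; [lra|]. rewrite Hp at 1.
    unfold padd, pscale, psub; simpl. rewrite H. f_equal; replace (lam1 p) with (1 - lam2 p) by lra; ring.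
Qed.

End Tri.

Lemma seg_in_tri_aux (P Q R x : pt) : in_seg P Q x ->
  exists t, 0 <= t <= 1 /\ x = padd (pscale (1 - t) P) (padd (pscale t Q) (pscale 0 R)).
Proof.
  intros [t [Ht ->]]. exists t. split; auto. unfold padd, pscale, psub; simpl. f_equal; ring.
Qed.

Lemma bdry_in_tri A B C x : on_bdry A B C x -> in_tri A B C x.
Proof.
  intros [H|[H|H]]; destruct H as [t [Ht ->]].
  - exists (1 - t), t, 0. repeat split; try lra. unfold padd, pscale, psub; simpl. f_equal; ring.
  - exists 0, (1 - t), t. repeat split; try lra. unfold padd, pscale, psub; simpl. f_equal; ring.
  - exists t, 0, (1 - t). repeat split; try lra. unfold padd, pscale, psub; simpl. f_equal; ring.
Qed.

Lemma comb_bound l1 l2 l3 x1 x2 x3 h : 0 <= l1 -> 0 <= l2 -> 0 <= l3 -> l1 + l2 + l3 = 1 ->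
  Rabs x1 <= h -> Rabs x2 <= h -> Rabs x3 <= h -> Rabs (l1 * x1 + l2 * x2 + l3 * x3) <= h.
Proof.
  intros. apply Rabs_le. apply Rabs_le_inv in H3. apply Rabs_le_inv in H4. apply Rabs_le_inv in H5.
  split; nra.
Qed.

Lemma coord_le_pdist p q : Rabs (fst p - fst q) <= pdist p q /\ Rabs (snd p - snd q) <= pdist p q.
Proof.
  unfold pdist, pnorm, pdot, psub; simpl. split.
  - rewrite <- sqrt_Rsqr_abs. apply sqrt_le_1_alt. unfold Rsqr. pose proof (Rle_0_sqr (snd p - snd q)); unfold Rsqr in *; lra.
  - rewrite <- sqrt_Rsqr_abs. apply sqrt_le_1_alt. pose proof (Rle_0_sqr (fst p - fst q)); unfold Rsqr in *; lra.
Qed.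

Lemma pdist_sym p q : pdist p q = pdist q p.
Proof. unfold pdist, pnorm, pdot, psub; simpl. f_equal. ring. Qed.

Lemma pdist_self p : pdist p p = 0.
Proof. unfold pdist, pnorm, pdot, psub; simpl. replace (_ + _) with 0 by ring. apply sqrt_0. Qed.

Lemma vert_dist A B C : forall P Q, (P = A \/ P = B \/ P = C) -> (Q = A \/ Q = B \/ Q = C) ->
  pdist P Q <= diamT A B C.
Proof.
  assert (H1 : pdist A B <= diamT A B C) by apply Rmax_l.
  assert (H2 : pdist B C <= diamT A B C) by (unfold diamT; eapply Rle_trans; [apply Rmax_l|apply Rmax_r]).
  assert (H3 : pdist C A <= diamT A B C) by (unfold diamT; eapply Rle_trans; [apply Rmax_r|apply Rmax_r]).
  assert (H0 : 0 <= diamT A B C) by (eapply Rle_trans; [apply sqrt_pos|apply H1]).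
  intros P Q HP HQ.
  destruct HP as [ -> | [ -> | -> ] ], HQ as [ -> | [ -> | -> ] ]; rewrite ?pdist_self; auto;
    rewrite pdist_sym; auto.
Qed.

Lemma tri_coord_bound A B C p q : in_tri A B C p -> in_tri A B C q ->
  Rabs (fst p - fst q) <= diamT A B C /\ Rabs (snd p - snd q) <= diamT A B C.
Proof.
  intros [l1 [l2 [l3 [H1 [H2 [H3 [H4 ->]]]]]]] [m1 [m2 [m3 [M1 [M2 [M3 [M4 ->]]]]]]].
  assert (Hv : forall P Q, (P = A \/ P = B \/ P = C) -> (Q = A \/ Q = B \/ Q = C) ->
     Rabs (fst P - fst Q) <= diamT A B C /\ Rabs (snd P - snd Q) <= diamT A B C).
  { intros P Q HP HQ. pose proof (vert_dist A B C P Q HP HQ). destruct (coord_le_pdist P Q). split; lra. }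
  unfold padd, pscale; simpl.
  assert (Hq : forall P, (P = A \/ P = B \/ P = C) ->
     Rabs (fst P - (m1 * fst A + (m2 * fst B + m3 * fst C))) <= diamT A B C /\
     Rabs (snd P - (m1 * snd A + (m2 * snd B + m3 * snd C))) <= diamT A B C).
  { intros P HP. split.
    - replace (fst P - (m1 * fst A + (m2 * fst B + m3 * fst C))) with
        (m1 * (fst P - fst A) + m2 * (fst P - fst B) + m3 * (fst P - fst C)).
      2:{ transitivity ((m1 + m2 + m3) * fst P - (m1 * fst A + (m2 * fst B + m3 * fst C))); [ring|]. rewrite M4; ring. }
      apply comb_bound; auto; apply Hv; auto.
    - replace (snd P - (m1 * snd A + (m2 * snd B + m3 * snd C))) with
        (m1 * (snd P - snd A) + m2 * (snd P - snd B) + m3 * (snd P - snd C)).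
      2:{ transitivity ((m1 + m2 + m3) * snd P - (m1 * snd A + (m2 * snd B + m3 * snd C))); [ring|]. rewrite M4; ring. }
      apply comb_bound; auto; apply Hv; auto. }
  split.
  - replace (l1 * fst A + (l2 * fst B + l3 * fst C) - (m1 * fst A + (m2 * fst B + m3 * fst C))) with
      (l1 * (fst A - (m1 * fst A + (m2 * fst B + m3 * fst C))) + l2 * (fst B - (m1 * fst A + (m2 * fst B + m3 * fst C))) + l3 * (fst C - (m1 * fst A + (m2 * fst B + m3 * fst C)))).
    2:{ transitivity (l1 * fst A + l2 * fst B + l3 * fst C - (l1 + l2 + l3) * (m1 * fst A + (m2 * fst B + m3 * fst C))); [ring|]. rewrite H4; ring. }
    apply comb_bound; auto; apply Hq; auto.
  - replace (l1 * snd A + (l2 * snd B + l3 * snd C) - (m1 * snd A + (m2 * snd B + m3 * snd C))) with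
      (l1 * (snd A - (m1 * snd A + (m2 * snd B + m3 * snd C))) + l2 * (snd B - (m1 * snd A + (m2 * snd B + m3 * snd C))) + l3 * (snd C - (m1 * snd A + (m2 * snd B + m3 * snd C)))).
    2:{ transitivity (l1 * snd A + l2 * snd B + l3 * snd C - (l1 + l2 + l3) * (m1 * snd A + (m2 * snd B + m3 * snd C))); [ring|]. rewrite H4; ring. }
    apply comb_bound; auto; apply Hq; auto.
Qed.


Lemma dcont (f : R -> R) x l : derivable_pt_lim f x l -> continuity_pt f x.
Proof. intros H. apply derivable_continuous_pt. exists l. exact H. Qed.

Lemma lin2_deriv (f g : R -> R) x a b al be de :
  derivable_pt_lim f x a -> derivable_pt_lim g x b ->
  derivable_pt_lim (fun u => al + be * f u + de * g u) x (be * a + de * b).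
Proof.
  intros Hf Hg.
  pose proof (derivable_pt_lim_scal f be x a Hf) as H1.
  pose proof (derivable_pt_lim_scal g de x b Hg) as H2.
  pose proof (derivable_pt_lim_plus _ _ x _ _ (derivable_pt_lim_const al x) H1) as H3.
  pose proof (derivable_pt_lim_plus _ _ x _ _ H3 H2) as H4.
  unfold plus_fct, mult_real_fct in H4; cbv beta in H4.
  eapply dl_eq; [exact H4|ring].
Qed.

Lemma Rmin_cont (f g : R -> R) x : continuity_pt f x -> continuity_pt g x ->
  continuity_pt (fun u => Rmin (f u) (g u)) x.
Proof.
  intros Hf Hg.
  assert (E : (fun u => Rmin (f u) (g u)) = mult_real_fct (/2) ((f + g) - comp Rabs (f - g))%F).
  { apply functional_extensionality; intro u. unfold mult_real_fct, plus_fct, minus_fct, comp.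
    unfold Rmin. destruct (Rle_dec (f u) (g u)).
    - rewrite Rabs_left1 by lra. field.
    - rewrite Rabs_right by lra. field. }
  rewrite E. apply continuity_pt_scal. apply continuity_pt_minus.
  - apply continuity_pt_plus; auto.
  - apply continuity_pt_comp. apply continuity_pt_minus; auto. apply Rcontinuity_abs.
Qed.

Lemma lip_bound (f f' : R -> R) lo hi M :
  (forall u, lo <= u <= hi -> derivable_pt_lim f u (f' u)) ->
  (forall u, lo <= u <= hi -> Rabs (f' u) <= M) ->
  forall u v, lo <= u <= hi -> lo <= v <= hi -> Rabs (f u - f v) <= M * Rabs (u - v).
Proof.
  intros Hd Hb u v Hu Hv.
  destruct (Rtotal_order u v) as [H|[H|H]].
  - destruct (MVT_cor2 f f' u v H (fun c Hc => Hd c ltac:(lra))) as [c [Hc Hc']].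
    rewrite <- Rabs_Ropp, Ropp_minus_distr, Hc, Rabs_mult, (Rabs_left (u - v)) by lra.
    rewrite Ropp_minus_distr, (Rabs_right (v - u)) by lra.
    apply Rmult_le_compat_r; [lra|]. apply Hb; lra.
  - subst. rewrite !Rminus_diag_eq, Rabs_R0 by reflexivity. lra.
  - destruct (MVT_cor2 f f' v u H (fun c Hc => Hd c ltac:(lra))) as [c [Hc Hc']].
    rewrite Hc, Rabs_mult, (Rabs_right (u - v)) by lra.
    apply Rmult_le_compat_r; [lra|]. apply Hb; lra.
Qed.

Lemma affine_cont (g1 g2 g1' g2' : R -> R) al be de :
  (forall x, derivable_pt_lim g1 x (g1' x)) -> (forall x, derivable_pt_lim g2 x (g2' x)) ->
  forall x, continuity_pt (fun u => al + be * g1 u + de * g2 u) x.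
Proof. intros H1 H2 x. eapply dcont. apply lin2_deriv; auto. Qed.

Lemma lam_cont A B C (g1 g2 g1' g2' : R -> R) : nondegenerate A B C ->
  (forall x, derivable_pt_lim g1 x (g1' x)) -> (forall x, derivable_pt_lim g2 x (g2' x)) ->
  forall x, continuity_pt (fun u => Rmin (lam1 A B C (g1 u, g2 u))
                (Rmin (lam2 A B C (g1 u, g2 u)) (lam3 A B C (g1 u, g2 u)))) x.
Proof.
  intros HD H1 H2 x. unfold nondegenerate in HD.
  unfold lam1, lam2, lam3 in *. set (D := cross (psub B A) (psub C A)) in *.
  unfold cross, psub in *. destruct A as [a1 a2], B as [b1 b2], C as [c1 c2]; simpl in *.
  apply Rmin_cont; [|apply Rmin_cont].
  - replace (fun u => 1 - ((g1 u - a1) * (c2 - a2) - (g2 u - a2) * (c1 - a1)) / D -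
        ((b1 - a1) * (g2 u - a2) - (b2 - a2) * (g1 u - a1)) / D) with
      (fun u => (1 - (- a1 * (c2 - a2) + a2 * (c1 - a1)) / D - (- (b1 - a1) * a2 + (b2 - a2) * a1) / D)
        + (- (c2 - a2) / D + (b2 - a2) / D) * g1 u + ((c1 - a1) / D - (b1 - a1) / D) * g2 u).
    + eapply affine_cont; eauto.
    + apply functional_extensionality; intro u. unfold D. field; auto.
  - replace (fun u => ((g1 u - a1) * (c2 - a2) - (g2 u - a2) * (c1 - a1)) / D) with
      (fun u => (- a1 * (c2 - a2) + a2 * (c1 - a1)) / D + ((c2 - a2) / D) * g1 u + (- (c1 - a1) / D) * g2 u).
    + eapply affine_cont; eauto.
    + apply functional_extensionality; intro u. unfold D. field; auto.
  - replace (fun u => ((b1 - a1) * (g2 u - a2) - (b2 - a2) * (g1 u - a1)) / D) with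
      (fun u => (- (b1 - a1) * a2 + (b2 - a2) * a1) / D + (- (b2 - a2) / D) * g1 u + ((b1 - a1) / D) * g2 u).
    + eapply affine_cont; eauto.
    + apply functional_extensionality; intro u. unfold D. field; auto.
Qed.

Section Curve.
Variables (g1 g2 : R -> R).
Hypothesis Hper : forall s, g1 (s + 1) = g1 s /\ g2 (s + 1) = g2 s.
Hypothesis Hinj : forall s t, 0 <= s < 1 -> 0 <= t < 1 -> g1 s = g1 t -> g2 s = g2 t -> s = t.

Lemma per_nat n s : g1 (s + INR n) = g1 s /\ g2 (s + INR n) = g2 s.
Proof.
  induction n as [|n IH]; [simpl; rewrite Rplus_0_r; auto|].
  rewrite S_INR, <- Rplus_assoc. destruct (Hper (s + INR n)) as [A B]. rewrite A, B. exact IH.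
Qed.

Lemma per_Z z s : g1 (s + IZR z) = g1 s /\ g2 (s + IZR z) = g2 s.
Proof.
  destruct z as [|p|p].
  - rewrite Rplus_0_r; auto.
  - rewrite <- positive_nat_Z, <- INR_IZR_INZ. apply per_nat.
  - rewrite <- Pos2Z.opp_pos, opp_IZR, <- positive_nat_Z, <- INR_IZR_INZ.
    pose proof (per_nat (Pos.to_nat p) (s + - INR (Pos.to_nat p))) as H.
    replace (s + - INR (Pos.to_nat p) + INR (Pos.to_nat p)) with s in H by ring.
    destruct H; split; auto.
Qed.

Lemma frac_rep s : exists s' z, 0 <= s' < 1 /\ s = s' + IZR z.
Proof.
  exists (s - IZR (Int_part s)), (Int_part s). pose proof (base_Int_part s). split; [lra|ring].
Qed.

Lemma rep_Z u v : g1 u = g1 v -> g2 u = g2 v -> exists z, u = v + IZR z.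
Proof.
  intros H1 H2. destruct (frac_rep u) as [u' [zu [Hu ->]]]. destruct (frac_rep v) as [v' [zv [Hv ->]]].
  destruct (per_Z zu u') as [A1 A2]. destruct (per_Z zv v') as [B1 B2].
  rewrite A1, B1 in H1. rewrite A2, B2 in H2.
  pose proof (Hinj u' v' Hu Hv H1 H2). subst. exists (zu - zv)%Z. rewrite minus_IZR. ring.
Qed.

Lemma no_close u v : 0 < u - v < 1 -> g1 u = g1 v -> g2 u = g2 v -> False.
Proof.
  intros H H1 H2. destruct (rep_Z u v H1 H2) as [z ->].
  assert (0 < IZR z < 1) by lra. destruct H0 as [A B].
  apply lt_IZR in A. apply lt_IZR in B. lia.
Qed.

Lemma window s a : exists s', a <= s' < a + 1 /\ g1 s' = g1 s /\ g2 s' = g2 s.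
Proof.
  destruct (frac_rep (s - a)) as [f [z [Hf Hz]]]. exists (a + f). split; [lra|].
  replace s with (a + f + IZR z) by lra. destruct (per_Z z (a + f)). split; auto.
Qed.

End Curve.

Lemma min3_ge a b c : 0 <= Rmin a (Rmin b c) -> 0 <= a /\ 0 <= b /\ 0 <= c.
Proof. unfold Rmin; repeat destruct Rle_dec; intros; repeat split; lra. Qed.
Lemma min3_pos a b c : 0 < a -> 0 < b -> 0 < c -> 0 < Rmin a (Rmin b c).
Proof. unfold Rmin; repeat destruct Rle_dec; intros; lra. Qed.
Lemma min3_zero a b c : Rmin a (Rmin b c) = 0 -> (0 <= a /\ 0 <= b /\ 0 <= c) /\ (a = 0 \/ b = 0 \/ c = 0).
Proof. unfold Rmin; repeat destruct Rle_dec; intros; repeat split; lra. Qed.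

Lemma sq_le x h : Rabs x <= h -> x * x <= h * h.
Proof. intros H. apply Rabs_le_inv in H. nra. Qed.

Lemma dot_bound a1 a2 b1 b2 A Bb : Rabs a1 <= A -> Rabs a2 <= A -> Rabs b1 <= Bb -> Rabs b2 <= Bb ->
  Rabs (a1 * b1 + a2 * b2) <= 2 * A * Bb.
Proof.
  intros H1 H2 H3 H4. eapply Rle_trans; [apply Rabs_triang|]. rewrite !Rabs_mult.
  assert (Rabs a1 * Rabs b1 <= A * Bb) by (apply Rmult_le_compat; auto using Rabs_pos).
  assert (Rabs a2 * Rabs b2 <= A * Bb) by (apply Rmult_le_compat; auto using Rabs_pos).
  lra.
Qed.

Section Arc.
Variables g1 g2 g1' g2' g1'' g2'' : R -> R.
Hypothesis Hper : forall s, g1 (s + 1) = g1 s /\ g2 (s + 1) = g2 s.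
Hypothesis Hinj : forall s t, 0 <= s < 1 -> 0 <= t < 1 -> g1 s = g1 t -> g2 s = g2 t -> s = t.
Hypothesis Hd1 : forall x, derivable_pt_lim g1 x (g1' x).
Hypothesis Hd2 : forall x, derivable_pt_lim g2 x (g2' x).
Hypothesis Hdd1 : forall x, derivable_pt_lim g1' x (g1'' x).
Hypothesis Hdd2 : forall x, derivable_pt_lim g2' x (g2'' x).
Variables M1 K m0 eps d0 h0 : R.
Hypothesis HM1 : forall u, 0 <= u <= 3 -> Rabs (g1' u) <= M1 /\ Rabs (g2' u) <= M1.
Hypothesis HK : forall u, 0 <= u <= 3 -> Rabs (g1'' u) <= K /\ Rabs (g2'' u) <= K.
Hypothesis Hm0 : 0 < m0.
Hypothesis Hm0' : forall u, 0 <= u <= 3 -> m0 <= g1' u * g1' u + g2' u * g2' u.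
Hypothesis Heps : 0 < eps <= 1/2.
Hypothesis Heps' : 2 * M1 * K * eps <= m0 / 2.
Hypothesis Hd0 : 0 < d0.
Hypothesis Hd0' : forall u, 0 <= u <= 2 ->
  d0 <= (g1 (u + eps) - g1 u) * (g1 (u + eps) - g1 u) + (g2 (u + eps) - g2 u) * (g2 (u + eps) - g2 u).
Hypothesis Hh0 : 0 < h0 <= 1.
Hypothesis Hh0' : 2 * h0 * h0 < d0.

Lemma arc_bound A B C : nondegenerate A B C -> diamT A B C <= h0 ->
  forall y z, on_bdry A B C y -> on_bdry A B C z ->
  (forall x, on_curve g1 g2 x -> on_bdry A B C x -> x = y \/ x = z) ->
  forall eta, Rabs (fst eta) <= 1 -> Rabs (snd eta) <= 1 -> pdot eta (psub z y) = 0 ->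
  forall p c q, 0 <= p -> p < c -> c < q -> q <= p + 1 -> q < 2 ->
  (((g1 p, g2 p) = y /\ (g1 q, g2 q) = z) \/ ((g1 p, g2 p) = z /\ (g1 q, g2 q) = y)) ->
  in_tri A B C (g1 c, g2 c) -> ~ on_bdry A B C (g1 c, g2 c) ->
  Rabs (pdot eta (psub (g1 c, g2 c) y)) <= 2 * K * (4 * M1 / m0) ^ 2 * pdist y z ^ 2.
Proof.
  intros HD Hh y z Hy Hz Hbd eta He1 He2 Hez p c q Hp Hpc Hcq Hqp Hq2 Hends Hc Hcb.
  set (phiT := fun u => Rmin (lam1 A B C (g1 u, g2 u)) (Rmin (lam2 A B C (g1 u, g2 u)) (lam3 A B C (g1 u, g2 u)))).
  assert (Hcont : continuity phiT) by (intros x; eapply lam_cont; eauto).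
  assert (Hphic : 0 < phiT c).
  { destruct (in_tri_lam A B C HD _ Hc) as [L1 [L2 L3]]. unfold phiT. apply min3_pos.
    - destruct (Rle_lt_or_eq_dec _ _ L1) as [?|E]; auto. exfalso; apply Hcb, lam_bdry; auto.
    - destruct (Rle_lt_or_eq_dec _ _ L2) as [?|E]; auto. exfalso; apply Hcb, lam_bdry; auto.
    - destruct (Rle_lt_or_eq_dec _ _ L3) as [?|E]; auto. exfalso; apply Hcb, lam_bdry; auto. }
  assert (Hnz : forall w, p < w < q -> phiT w <> 0).
  { intros w Hw E. apply min3_zero in E. destruct E as [[L1 [L2 L3]] E].
    assert (Hb : on_bdry A B C (g1 w, g2 w)) by (apply lam_bdry; auto).
    assert (Hc' : on_curve g1 g2 (g1 w, g2 w)) by (exists w; reflexivity).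
    destruct (Hbd _ Hc' Hb) as [Ew|Ew]; destruct Hends as [[Ep Eq]|[Ep Eq]];
      rewrite <- ?Ep, <- ?Eq in Ew; injection Ew as Ew1 Ew2.
    - apply (no_close g1 g2 Hper Hinj w p); auto; lra.
    - apply (no_close g1 g2 Hper Hinj q w); auto; lra.
    - apply (no_close g1 g2 Hper Hinj q w); auto; lra.
    - apply (no_close g1 g2 Hper Hinj w p); auto; lra. }
  assert (Hend : in_tri A B C (g1 p, g2 p) /\ in_tri A B C (g1 q, g2 q)).
  { destruct Hends as [[-> ->]|[-> ->]]; split; apply bdry_in_tri; auto. }
  assert (Hin : forall u, p <= u <= q -> in_tri A B C (g1 u, g2 u)).
  { intros u Hu. destruct (Req_dec u p) as [->|Hup]; [apply Hend|].
    destruct (Req_dec u q) as [->|Huq]; [apply Hend|].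
    assert (H0 : 0 <= phiT u).
    { destruct (Rle_or_lt 0 (phiT u)) as [?|Hneg]; auto. exfalso.
      destruct (Rtotal_order u c) as [Huc|[Huc|Huc]].
      - destruct (IVT phiT u c Hcont Huc Hneg Hphic) as [w [Hw Ew]].
        apply (Hnz w); auto. split.
        + destruct (Req_dec w u) as [->|]; [lra|lra].
        + lra.
      - subst; lra.
      - assert (Hc2 : continuity (fun x => - phiT x)) by (apply continuity_opp; auto).
        destruct (IVT (fun x => - phiT x) c u Hc2 Huc ltac:(lra) ltac:(lra)) as [w [Hw Ew]].
        apply (Hnz w); [|lra]. split; [lra|].
        destruct (Req_dec w u) as [->|]; lra. }
    apply min3_ge in H0. destruct H0 as [L1 [L2 L3]]. apply lam_in_tri; auto. }
  assert (Hh0n : 0 <= diamT A B C).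
  { eapply Rle_trans; [apply sqrt_pos|apply Rmax_l]. }
  assert (HL : q - p < eps).
  { destruct (Rlt_or_le (q - p) eps) as [?|Hge]; auto. exfalso.
    destruct (tri_coord_bound A B C _ _ (Hin (p + eps) ltac:(lra)) (Hin p ltac:(lra))) as [T1 T2].
    simpl in T1, T2. pose proof (Hd0' p ltac:(lra)) as Hd.
    pose proof (sq_le _ _ T1) as S1. pose proof (sq_le _ _ T2) as S2.
    assert (diamT A B C * diamT A B C <= h0 * h0) by (apply Rmult_le_compat; lra).
    lra. }
  set (L := q - p). set (e1 := fst eta). set (e2 := snd eta).
  assert (HM0 : 0 <= M1) by (pose proof (HM1 0 ltac:(lra)) as [H _]; pose proof (Rabs_pos (g1' 0)); lra).
  assert (HK0 : 0 <= K) by (pose proof (HK 0 ltac:(lra)) as [H _]; pose proof (Rabs_pos (g1'' 0)); lra).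
  set (phi := fun u => 0 + e1 * g1 u + e2 * g2 u).
  set (phi' := fun u => 0 + e1 * g1' u + e2 * g2' u).
  assert (Dphi : forall x, derivable_pt_lim phi x (phi' x)).
  { intros x. unfold phi, phi'. eapply dl_eq; [apply lin2_deriv; auto|ring]. }
  assert (Dphi' : forall x, derivable_pt_lim phi' x (e1 * g1'' x + e2 * g2'' x)).
  { intros x. unfold phi'. apply lin2_deriv; auto. }
  assert (Hpq : phi p = phi q).
  { unfold pdot, psub in Hez. unfold phi, e1, e2.
    destruct Hends as [[<- <-]|[<- <-]]; simpl in Hez; lra. }
  assert (Hs : pdot eta (psub (g1 c, g2 c) y) = phi c - phi p).
  { unfold pdot, psub. unfold phi, e1, e2.
    destruct Hends as [[<- _]|[_ <-]]; simpl; [ring|]. unfold phi, e1, e2 in Hpq. lra. }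
  destruct (MVT_cor2 phi phi' p q ltac:(lra) (fun c _ => Dphi c)) as [xi [Hxi Hxi']].
  assert (Hxi0 : phi' xi = 0).
  { rewrite <- Hpq in Hxi. fold L in Hxi. assert (0 < L) by (unfold L; lra).
    apply (Rmult_eq_reg_r L); lra. }
  assert (Bphi'' : forall u, 0 <= u <= 3 -> Rabs (e1 * g1'' u + e2 * g2'' u) <= 2 * 1 * K).
  { intros u Hu. destruct (HK u Hu). apply dot_bound; auto. }
  assert (Bphi' : forall u, p <= u <= q -> Rabs (phi' u) <= 2 * K * L).
  { intros u Hu. pose proof (lip_bound phi' _ 0 3 (2 * 1 * K) (fun u _ => Dphi' u) Bphi'' u xi
      ltac:(lra) ltac:(lra)) as H. rewrite Hxi0, Rminus_0_r in H.
    eapply Rle_trans; [exact H|]. replace (2 * K * L) with (2 * 1 * K * L) by ring.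
    apply Rmult_le_compat_l; [lra|]. apply Rabs_le; unfold L; lra. }
  pose proof (lip_bound phi phi' p q (2 * K * L) (fun u _ => Dphi u) Bphi' c p ltac:(lra) ltac:(lra)) as Hphic2.
  rewrite (Rabs_right (c - p)) in Hphic2 by lra.
  set (w1 := g1' p). set (w2 := g2' p).
  set (psi := fun u => 0 + w1 * g1 u + w2 * g2 u).
  set (psi' := fun u => 0 + w1 * g1' u + w2 * g2' u).
  assert (Dpsi : forall x, derivable_pt_lim psi x (psi' x)).
  { intros x. unfold psi, psi'. eapply dl_eq; [apply lin2_deriv; auto|ring]. }
  assert (Hw : Rabs w1 <= M1 /\ Rabs w2 <= M1) by (apply HM1; lra).
  assert (Bpsi' : forall u, p <= u <= q -> m0 / 2 <= psi' u).
  { intros u Hu.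
    assert (Hl1 := lip_bound g1' g1'' 0 3 K (fun u _ => Hdd1 u) (fun u Hu => proj1 (HK u Hu)) u p ltac:(lra) ltac:(lra)).
    assert (Hl2 := lip_bound g2' g2'' 0 3 K (fun u _ => Hdd2 u) (fun u Hu => proj2 (HK u Hu)) u p ltac:(lra) ltac:(lra)).
    rewrite (Rabs_right (u - p)) in Hl1, Hl2 by lra.
    assert (K * (u - p) <= K * eps) by (apply Rmult_le_compat_l; unfold L in *; lra).
    pose proof (dot_bound w1 w2 (g1' u - w1) (g2' u - w2) M1 (K * eps) (proj1 Hw) (proj2 Hw)
      ltac:(unfold w1; lra) ltac:(unfold w2; lra)) as Hdb.
    pose proof (Hm0' p ltac:(lra)) as Hm. fold w1 w2 in Hm.
    apply Rabs_le_inv in Hdb. unfold psi'.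
    replace (0 + w1 * g1' u + w2 * g2' u) with ((w1 * w1 + w2 * w2) + (w1 * (g1' u - w1) + w2 * (g2' u - w2))) by ring.
    assert (2 * M1 * (K * eps) <= m0 / 2) by lra. lra. }
  destruct (MVT_cor2 psi psi' p q ltac:(lra) (fun c _ => Dpsi c)) as [xi2 [Hxi2 Hxi2']].
  assert (Hpsi1 : m0 / 2 * L <= psi q - psi p).
  { rewrite Hxi2. fold L. apply Rmult_le_compat_r; [unfold L; lra|]. apply Bpsi'; lra. }
  assert (Hpsi2 : Rabs (psi q - psi p) <= 2 * M1 * pdist y z).
  { unfold psi. replace (0 + w1 * g1 q + w2 * g2 q - (0 + w1 * g1 p + w2 * g2 p)) with
      (w1 * (g1 q - g1 p) + w2 * (g2 q - g2 p)) by ring.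
    pose proof (coord_le_pdist (g1 q, g2 q) (g1 p, g2 p)) as [Cq1 Cq2]. simpl in Cq1, Cq2.
    assert (Epd : pdist (g1 q, g2 q) (g1 p, g2 p) = pdist y z).
    { destruct Hends as [[<- <-]|[<- <-]]; [apply pdist_sym|reflexivity]. }
    rewrite Epd in Cq1, Cq2. apply dot_bound; try apply Hw; auto. }
  assert (HLb : L <= 4 * M1 / m0 * pdist y z).
  { pose proof (Rle_abs (psi q - psi p)).
    apply (Rmult_le_reg_l (m0 / 2)); [lra|].
    replace (m0 / 2 * (4 * M1 / m0 * pdist y z)) with (2 * M1 * pdist y z) by (field; lra). lra. }
  rewrite Hs. eapply Rle_trans; [exact Hphic2|].
  assert (0 <= L) by (unfold L; lra).
  assert (c - p <= L) by (unfold L; lra).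
  assert (L * L <= (4 * M1 / m0 * pdist y z) * (4 * M1 / m0 * pdist y z)) by (apply Rmult_le_compat; lra).
  assert (2 * K * L * (c - p) <= 2 * K * L * L).
  { apply Rmult_le_compat_l; [|lra]. apply Rmult_le_pos; lra. }
  assert (2 * K * (L * L) <= 2 * K * ((4 * M1 / m0 * pdist y z) * (4 * M1 / m0 * pdist y z)))
    by (apply Rmult_le_compat_l; lra).
  replace (2 * K * (4 * M1 / m0) ^ 2 * pdist y z ^ 2) with
    (2 * K * ((4 * M1 / m0 * pdist y z) * (4 * M1 / m0 * pdist y z))) by ring.
  lra.
Qed.

End Arc.

Lemma shift_deriv (g g' : R -> R) a : (forall x, derivable_pt_lim g x (g' x)) ->
  forall x, derivable_pt_lim (fun u => g (u + a)) x (g' (x + a)).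
Proof.
  intros H x.
  pose proof (derivable_pt_lim_plus (fun u => u) (fun _ => a) x 1 0 (derivable_pt_lim_id x)
    (derivable_pt_lim_const a x)) as H1. unfold plus_fct in H1; cbv beta in H1.
  pose proof (derivable_pt_lim_comp (fun u => u + a) g x _ _ H1 (H (x + a))) as H2.
  unfold comp in H2. eapply dl_eq; [exact H2|ring].
Qed.

Lemma sqdiff_cont (g1 g2 g1' g2' : R -> R) a :
  (forall x, derivable_pt_lim g1 x (g1' x)) -> (forall x, derivable_pt_lim g2 x (g2' x)) ->
  forall x, continuity_pt (fun u => (g1 (u + a) - g1 u) * (g1 (u + a) - g1 u) +
                                  (g2 (u + a) - g2 u) * (g2 (u + a) - g2 u)) x.
Proof.
  intros H1 H2 x.
  assert (C1 : continuity_pt (fun u => g1 (u + a) - g1 u) x).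
  { apply (continuity_pt_minus (fun u => g1 (u + a)) g1).
    - eapply dcont; apply shift_deriv; eauto.
    - eapply dcont; eauto. }
  assert (C2 : continuity_pt (fun u => g2 (u + a) - g2 u) x).
  { apply (continuity_pt_minus (fun u => g2 (u + a)) g2).
    - eapply dcont; apply shift_deriv; eauto.
    - eapply dcont; eauto. }
  apply (continuity_pt_plus (fun u => (g1 (u + a) - g1 u) * (g1 (u + a) - g1 u))
                            (fun u => (g2 (u + a) - g2 u) * (g2 (u + a) - g2 u))).
  - apply (continuity_pt_mult (fun u => g1 (u + a) - g1 u) (fun u => g1 (u + a) - g1 u)); auto.
  - apply (continuity_pt_mult (fun u => g2 (u + a) - g2 u) (fun u => g2 (u + a) - g2 u)); auto.
Qed.

Lemma abs2_cont (f g f' g' : R -> R) :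
  (forall x, derivable_pt_lim f x (f' x)) -> (forall x, derivable_pt_lim g x (g' x)) ->
  forall x, continuity_pt (fun u => Rabs (f u) + Rabs (g u)) x.
Proof.
  intros H1 H2 x.
  apply (continuity_pt_plus (fun u => Rabs (f u)) (fun u => Rabs (g u))).
  - apply (continuity_pt_comp f Rabs). eapply dcont; eauto. apply Rcontinuity_abs.
  - apply (continuity_pt_comp g Rabs). eapply dcont; eauto. apply Rcontinuity_abs.
Qed.

Lemma sq2_cont (f g f' g' : R -> R) :
  (forall x, derivable_pt_lim f x (f' x)) -> (forall x, derivable_pt_lim g x (g' x)) ->
  forall x, continuity_pt (fun u => f u * f u + g u * g u) x.
Proof.
  intros H1 H2 x.
  apply (continuity_pt_plus (fun u => f u * f u) (fun u => g u * g u)).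
  - apply (continuity_pt_mult f f); eapply dcont; eauto.
  - apply (continuity_pt_mult g g); eapply dcont; eauto.
Qed.

Lemma curve_geom g1 g2 : smooth_closed_curve g1 g2 -> exists h0 B, 0 < h0 /\ h0 <= 1 /\ 0 <= B /\
  forall A Bv Cv, nondegenerate A Bv Cv -> diamT A Bv Cv <= h0 ->
  forall y z, y <> z -> on_curve g1 g2 y -> on_curve g1 g2 z ->
  on_bdry A Bv Cv y -> on_bdry A Bv Cv z ->
  (forall x, on_curve g1 g2 x -> on_bdry A Bv Cv x -> x = y \/ x = z) ->
  forall eta, Rabs (fst eta) <= 1 -> Rabs (snd eta) <= 1 -> pdot eta (psub z y) = 0 ->
  forall X, on_curve g1 g2 X -> in_tri A Bv Cv X ->
  Rabs (pdot eta (psub X y)) <= B * pdist y z ^ 2.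
Proof.
  intros [[D1 [E1 HD1]] [[D2 [E2 HD2]] [Hper [Hreg Hinj]]]].
  assert (Hd1 : forall x, derivable_pt_lim g1 x (D1 1%nat x)) by (intros; rewrite <- E1; apply HD1).
  assert (Hd2 : forall x, derivable_pt_lim g2 x (D2 1%nat x)) by (intros; rewrite <- E2; apply HD2).
  assert (Hdd1 : forall x, derivable_pt_lim (D1 1%nat) x (D1 2%nat x)) by (intros; apply HD1).
  assert (Hdd2 : forall x, derivable_pt_lim (D2 1%nat) x (D2 2%nat x)) by (intros; apply HD2).
  destruct (continuity_ab_maj (fun u => Rabs (D1 1%nat u) + Rabs (D2 1%nat u)) 0 3 ltac:(lra)
    (fun c _ => abs2_cont _ _ _ _ Hdd1 Hdd2 c)) as [xM [HxM _]].
  set (M1 := Rabs (D1 1%nat xM) + Rabs (D2 1%nat xM)).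
  assert (HM1 : forall u, 0 <= u <= 3 -> Rabs (D1 1%nat u) <= M1 /\ Rabs (D2 1%nat u) <= M1).
  { intros u Hu. pose proof (HxM u Hu). pose proof (Rabs_pos (D1 1%nat u)). pose proof (Rabs_pos (D2 1%nat u)).
    unfold M1; split; lra. }
  destruct (continuity_ab_maj (fun u => Rabs (D1 2%nat u) + Rabs (D2 2%nat u)) 0 3 ltac:(lra)
    (fun c _ => abs2_cont _ _ _ _ (HD1 2%nat) (HD2 2%nat) c)) as [xK [HxK _]].
  set (K := Rabs (D1 2%nat xK) + Rabs (D2 2%nat xK)).
  assert (HK : forall u, 0 <= u <= 3 -> Rabs (D1 2%nat u) <= K /\ Rabs (D2 2%nat u) <= K).
  { intros u Hu. pose proof (HxK u Hu). pose proof (Rabs_pos (D1 2%nat u)). pose proof (Rabs_pos (D2 2%nat u)).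
    unfold K; split; lra. }
  assert (HM0 : 0 <= M1) by (unfold M1; pose proof (Rabs_pos (D1 1%nat xM)); pose proof (Rabs_pos (D2 1%nat xM)); lra).
  assert (HK0 : 0 <= K) by (unfold K; pose proof (Rabs_pos (D1 2%nat xK)); pose proof (Rabs_pos (D2 2%nat xK)); lra).
  destruct (continuity_ab_min (fun u => D1 1%nat u * D1 1%nat u + D2 1%nat u * D2 1%nat u) 0 3 ltac:(lra)
    (fun c _ => sq2_cont _ _ _ _ Hdd1 Hdd2 c)) as [xm [Hxm _]].
  set (m0 := D1 1%nat xm * D1 1%nat xm + D2 1%nat xm * D2 1%nat xm).
  assert (Hm0 : 0 < m0).
  { unfold m0. destruct (Rlt_or_le 0 (D1 1%nat xm * D1 1%nat xm + D2 1%nat xm * D2 1%nat xm)) as [?|Hle]; auto.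
    exfalso. apply (Hreg xm (D1 1%nat xm) (D2 1%nat xm) (Hd1 xm) (Hd2 xm)).
    assert (D1 1%nat xm = 0) by nra. assert (D2 1%nat xm = 0) by nra.
    rewrite H, H0. reflexivity. }
  set (eps := Rmin (1/2) (m0 / (4 * M1 * K + 1))).
  assert (Heps : 0 < eps <= 1/2).
  { split; [apply Rmin_glb_lt; [lra|apply Rdiv_lt_0_compat; nra]|apply Rmin_l]. }
  assert (Heps' : 2 * M1 * K * eps <= m0 / 2).
  { assert (eps * (4 * M1 * K + 1) <= m0).
    { pose proof (Rmin_r (1/2) (m0 / (4 * M1 * K + 1))). fold eps in H.
      apply (Rmult_le_compat_r (4 * M1 * K + 1)) in H; [|nra].
      replace (m0 / (4 * M1 * K + 1) * (4 * M1 * K + 1)) with m0 in H by (field; nra). exact H. }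
    nra. }
  destruct (continuity_ab_min _ 0 2 ltac:(lra) (fun c _ => sqdiff_cont _ _ _ _ eps Hd1 Hd2 c)) as [xd [Hxd Hxd']].
  set (d0 := (g1 (xd + eps) - g1 xd) * (g1 (xd + eps) - g1 xd) + (g2 (xd + eps) - g2 xd) * (g2 (xd + eps) - g2 xd)).
  assert (Hd0 : 0 < d0).
  { unfold d0. destruct (Rlt_or_le 0 ((g1 (xd + eps) - g1 xd) * (g1 (xd + eps) - g1 xd) + (g2 (xd + eps) - g2 xd) * (g2 (xd + eps) - g2 xd))) as [?|Hle]; auto.
    exfalso. set (u1 := g1 (xd + eps) - g1 xd) in Hle. set (u2 := g2 (xd + eps) - g2 xd) in Hle.
    assert (U1 : u1 * u1 = 0) by (pose proof (Rle_0_sqr u1); pose proof (Rle_0_sqr u2); unfold Rsqr in *; lra).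
    assert (U2 : u2 * u2 = 0) by (pose proof (Rle_0_sqr u1); pose proof (Rle_0_sqr u2); unfold Rsqr in *; lra).
    apply Rmult_integral in U1. apply Rmult_integral in U2.
    apply (no_close g1 g2 Hper Hinj (xd + eps) xd).
    + clear -Heps; lra.
    + unfold u1 in U1; destruct U1; lra.
    + unfold u2 in U2; destruct U2; lra. }
  set (h0 := Rmin 1 (d0 / 4)).
  assert (Hh0 : 0 < h0 <= 1) by (split; [apply Rmin_glb_lt; lra|apply Rmin_l]).
  assert (Hh0' : 2 * h0 * h0 < d0).
  { pose proof (Rmin_r 1 (d0 / 4)). fold h0 in H. nra. }
  exists h0, (2 * K * (4 * M1 / m0) ^ 2). split; [lra|]. split; [lra|]. split.
  { apply Rmult_le_pos; [lra|]. apply pow2_ge_0. }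
  intros A Bv Cv HD Hh y z Hyz [sy Ey] [sz Ez] Hy Hz Hbd eta He1 He2 Hez X [sX EX] HX.
  destruct (window g1 g2 Hper sy 0) as [a [Ha [Ea1 Ea2]]].
  destruct (window g1 g2 Hper sz a) as [b [Hb [Eb1 Eb2]]].
  destruct (window g1 g2 Hper sX a) as [c [Hc [Ec1 Ec2]]].
  rewrite <- Ea1, <- Ea2 in Ey. rewrite <- Eb1, <- Eb2 in Ez. rewrite <- Ec1, <- Ec2 in EX.
  assert (Hnn : 0 <= 2 * K * (4 * M1 / m0) ^ 2 * pdist y z ^ 2).
  { apply Rmult_le_pos; [apply Rmult_le_pos; [lra|apply pow2_ge_0]|apply pow2_ge_0]. }
  destruct (classic (on_bdry A Bv Cv X)) as [HXb|HXb].
  { assert (HXc : on_curve g1 g2 X) by (exists c; auto).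
    destruct (Hbd X HXc HXb) as [ -> | -> ].
    - unfold pdot, psub. rewrite !Rminus_diag_eq by reflexivity. simpl. replace (fst eta * 0 + snd eta * 0) with 0 by ring. rewrite Rabs_R0. lra.
    - rewrite Hez, Rabs_R0. lra. }
  assert (Hab : a <> b).
  { intros ->. apply Hyz. rewrite Ey, Ez. reflexivity. }
  assert (Hca : c <> a) by (intros ->; apply HXb; rewrite EX, <- Ey; auto).
  assert (Hcb : c <> b) by (intros ->; apply HXb; rewrite EX, <- Ez; auto).
  rewrite EX in HX, HXb |- *.
  destruct (Rtotal_order c b) as [Hcb'|[Hcb'|Hcb']]; [|contradiction|].
  - apply (arc_bound g1 g2 (D1 1%nat) (D2 1%nat) (D1 2%nat) (D2 2%nat) Hper Hinj Hd1 Hd2 Hdd1 Hdd2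
      M1 K m0 eps d0 h0 HM1 HK Hm0 (fun u _ => Hxm u ltac:(lra)) Heps Heps' Hxd Hh0'
      A Bv Cv HD Hh y z Hy Hz Hbd eta He1 He2 Hez a c b); try lra.
    left; split; symmetry; assumption. assumption. assumption.
  - destruct (Hper a) as [P1 P2].
    apply (arc_bound g1 g2 (D1 1%nat) (D2 1%nat) (D1 2%nat) (D2 2%nat) Hper Hinj Hd1 Hd2 Hdd1 Hdd2
      M1 K m0 eps d0 h0 HM1 HK Hm0 (fun u _ => Hxm u ltac:(lra)) Heps Heps' Hxd Hh0'
      A Bv Cv HD Hh y z Hy Hz Hbd eta He1 He2 Hez b c (a + 1)); try lra.
    right; split; [symmetry; assumption|]. rewrite P1, P2. symmetry; assumption. assumption. assumption.
Qed.


Section Core.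
Variables (k : nat) (v : poly2) (y e eta : pt) (r Sd : R).
Hypothesis Hk : (0 < k)%nat.
Hypothesis Hv : deg_le k v.
Hypothesis Hr : 0 < r.
Hypothesis HS : 0 <= Sd.

Definition beta j p := peval k (pdirn p e (pdirn j eta v)) y.

Lemma beta_zero1 j p : (k < j)%nat -> beta j p = 0.
Proof.
  intros Hj. unfold beta. apply peval_pzero.
  assert (Hz : pzero (pdirn j eta v)) by (apply (pzero_pdirn k); auto).
  clear Hj. induction p as [|p IH]; [exact Hz|]. rewrite pdirn_S. apply pzero_pdir; auto.
Qed.

Lemma beta_zero2 j p : (j <= k)%nat -> (k - j < p)%nat -> beta j p = 0.
Proof.
  intros Hj Hp. unfold beta. apply peval_pzero. apply (pzero_pdirn (k - j)); auto.
  apply deg_pdirn; auto.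
Qed.

Definition U j t := sum_f_R0 (fun p => beta j p / INR (fact p) * t ^ p) k.

Lemma expand_gen (w : poly2) (Hw : deg_le k w) t s :
  peval k w (padd (padd y (pscale t e)) (pscale s eta)) =
  sum_f_R0 (fun j => sum_f_R0 (fun p => peval k (pdirn p e (pdirn j eta w)) y / INR (fact p) * t ^ p) k
                        / INR (fact j) * s ^ j) k.
Proof.
  rewrite taylor_line; auto. apply sum_eq; intros j _. rewrite taylor_line; auto.
  apply deg_pdirn_k; auto.
Qed.

Lemma expand_data l t s : (l <= k)%nat ->
  peval k (pdirn (k - l) eta v) (padd (padd y (pscale t e)) (pscale s eta)) =
  sum_f_R0 (fun q => U (q + (k - l)) t / INR (fact q) * s ^ q) k.
Proof.
  intros Hl. rewrite expand_gen by (apply deg_pdirn_k; auto).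
  apply sum_eq; intros q _. unfold U, beta. rewrite pdirn_add. reflexivity.
Qed.


Lemma sum_bound (f : nat -> R) n c : (forall i, (i <= n)%nat -> Rabs (f i) <= c) ->
  Rabs (sum_f_R0 f n) <= INR (S n) * c.
Proof.
  intros H. eapply Rle_trans; [apply sum_f_R0_triangle|].
  eapply Rle_trans; [apply (sum_Rle _ (fun _ => c)); auto|]. rewrite sum_cte. lra.
Qed.

Lemma inv_fact_le p : 0 < / INR (fact p) <= 1.
Proof.
  pose proof (lt_O_fact p) as H. apply lt_INR in H. simpl in H.
  assert (1 <= INR (fact p)) by (apply (le_INR 1); apply lt_O_fact).
  split; [apply Rinv_0_lt_compat; lra|]. rewrite <- Rinv_1. apply Rinv_le_contravar; lra.
Qed.

Lemma pow_le_1k x p : 0 <= x -> (p <= k)%nat -> x ^ p <= (1 + x) ^ k.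
Proof.
  intros Hx Hp. apply Rle_trans with ((1 + x) ^ p).
  - apply pow_incr; lra.
  - apply Rle_pow; [lra|auto].
Qed.

Variables (xs ss : nat -> nat -> R) (A Bs Gd Lam : R).
Hypothesis HA : 0 <= A.
Hypothesis HBs : 0 <= Bs.
Hypothesis HLam0 : 0 <= Lam.
Hypothesis Hdata : forall l i, (l <= k)%nat -> (i <= l)%nat ->
  Rabs (peval k (pdirn (k - l) eta v) (padd (padd y (pscale (xs l i * r) e)) (pscale (ss l i) eta)))
    <= r ^ l * Sd.
Hypothesis Hxs : forall l i, (l <= k)%nat -> (i <= l)%nat -> Rabs (xs l i) <= A.
Hypothesis Hgap : forall l i, (l <= k)%nat -> (i < l)%nat -> xs l i + Gd <= xs l (S i).
Hypothesis Hss : forall l i, (l <= k)%nat -> (i <= l)%nat -> Rabs (ss l i) <= Bs * r.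
Hypothesis HLamP : forall n, (n <= k)%nat ->
  forall (a x : nat -> R) V, (forall i, (i <= n)%nat -> Rabs (x i) <= A) ->
  (forall i, (i < n)%nat -> x i + Gd <= x (S i)) ->
  (forall i, (i <= n)%nat -> Rabs (E n a (x i)) <= V) ->
  forall p, (p <= n)%nat -> Rabs (a p) <= Lam * V.

Definition Fc := INR (S k) * INR (S k) * (1 + A) ^ k * (1 + Bs) ^ k.
Definition Nc := INR (fact k) * Lam.
Definition Plev l Ch := forall p, Rabs (beta (k - l) p) * r ^ p <= Ch * r ^ l * Sd.

Lemma U_bound j t l' Ch : 0 <= Ch -> Rabs t <= A * r ->
  (forall p, Rabs (beta j p) * r ^ p <= Ch * r ^ l' * Sd) ->
  Rabs (U j t) <= INR (S k) * ((1 + A) ^ k * (Ch * r ^ l' * Sd)).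
Proof.
  intros HCh Ht Hb. unfold U. apply sum_bound. intros p Hp.
  unfold Rdiv. rewrite !Rabs_mult, <- RPow_abs, (Rabs_right (/ _)) by (pose proof (inv_fact_le p); lra).
  pose proof (inv_fact_le p) as [F1 F2].
  assert (T1 : Rabs t ^ p <= A ^ p * r ^ p).
  { rewrite <- Rpow_mult_distr. apply pow_incr. split; [apply Rabs_pos|auto]. }
  assert (T2 : A ^ p <= (1 + A) ^ k) by (apply pow_le_1k; auto).
  pose proof (Hb p) as Hbp.
  assert (0 <= Ch * r ^ l' * Sd) by (apply Rmult_le_pos; [apply Rmult_le_pos; [auto|apply pow_le; lra]|auto]).
  assert (0 <= Rabs (beta j p)) by apply Rabs_pos.
  assert (0 <= r ^ p) by (apply pow_le; lra).
  assert (0 <= A ^ p) by (apply pow_le; lra).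
  assert (0 <= Rabs t ^ p) by (apply pow_le, Rabs_pos).
  apply Rle_trans with (Rabs (beta j p) * 1 * (A ^ p * r ^ p)).
  - apply Rmult_le_compat; try apply Rmult_le_pos; try lra.
    apply Rmult_le_compat_l; lra.
  - replace (Rabs (beta j p) * 1 * (A ^ p * r ^ p)) with (A ^ p * (Rabs (beta j p) * r ^ p)) by ring.
    apply Rmult_le_compat; try apply Rmult_le_pos; lra.
Qed.

Lemma step L Ch : (L <= k)%nat -> 0 <= Ch -> (forall l', (l' < L)%nat -> Plev l' Ch) ->
  Plev L (Nc * (1 + Fc * Ch)).
Proof.
  intros HL HCh IH.
  assert (HFc : 0 <= Fc).
  { unfold Fc. repeat apply Rmult_le_pos; try apply pos_INR; apply pow_le; lra. }
  set (V := (1 + Fc * Ch) * r ^ L * Sd).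
  assert (HV : 0 <= V).
  { unfold V. apply Rmult_le_pos; [apply Rmult_le_pos; [nra|apply pow_le; lra]|auto]. }
  assert (HUi : forall i, (i <= L)%nat -> Rabs (U (k - L) (xs L i * r)) <= V).
  { intros i Hi. set (t := xs L i * r). set (s := ss L i).
    assert (Ht : Rabs t <= A * r).
    { unfold t. rewrite Rabs_mult, (Rabs_right r) by lra. apply Rmult_le_compat_r; [lra|auto]. }
    assert (Hs : Rabs s <= Bs * r) by (apply Hss; auto).
    pose proof (Hdata L i HL Hi) as Hd. fold t s in Hd.
    rewrite expand_data in Hd by auto.
    rewrite decomp_sum in Hd by auto. rewrite pow_O in Hd.
    replace (U (0 + (k - L)) t / INR (fact 0) * 1) with (U (k - L) t) in Hd by (simpl; field).
    set (Rm := sum_f_R0 (fun i => U (S i + (k - L)) t / INR (fact (S i)) * s ^ S i) (pred k)) in Hd.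
    assert (HRm : Rabs Rm <= Fc * Ch * r ^ L * Sd).
    { apply Rle_trans with (INR (S (pred k)) * (INR (S k) * ((1 + A) ^ k * (1 + Bs) ^ k * (Ch * r ^ L * Sd)))).
      - apply sum_bound. intros q Hq.
        assert (B0 : 0 <= INR (S k) * ((1 + A) ^ k * (1 + Bs) ^ k * (Ch * r ^ L * Sd))).
        { repeat apply Rmult_le_pos; try apply pos_INR; try (apply pow_le; lra); auto. }
        destruct (le_lt_dec (S q) L) as [HqL|HqL].
        + set (l' := (L - S q)%nat).
          assert (Hj : (S q + (k - L) = k - l')%nat) by (unfold l'; lia).
          rewrite Hj.
          pose proof (U_bound (k - l') t l' Ch HCh Ht (IH l' ltac:(unfold l'; lia))) as HU.
          unfold Rdiv. rewrite !Rabs_mult, <- RPow_abs.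
          pose proof (inv_fact_le (S q)) as [F1 F2].
          rewrite (Rabs_right (/ INR (fact (S q)))) by lra.
          assert (Hsq : Rabs s ^ S q <= (1 + Bs) ^ k * r ^ S q).
          { apply Rle_trans with ((Bs * r) ^ S q).
            - apply pow_incr; split; [apply Rabs_pos|auto].
            - rewrite Rpow_mult_distr. apply Rmult_le_compat_r; [apply pow_le; lra|].
              apply pow_le_1k; auto; lia. }
          assert (Hrl : r ^ l' * r ^ S q = r ^ L) by (rewrite <- pow_add; f_equal; unfold l'; lia).
          assert (0 <= Rabs s ^ S q) by (apply pow_le, Rabs_pos).
          assert (0 <= Rabs (U (k - l') t)) by apply Rabs_pos.
          apply Rle_trans with (Rabs (U (k - l') t) * 1 * ((1 + Bs) ^ k * r ^ S q)).
          * apply Rmult_le_compat; [apply Rmult_le_pos; lra|lra|apply Rmult_le_compat_l; lra|exact Hsq].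
          * apply Rle_trans with (INR (S k) * ((1 + A) ^ k * (Ch * r ^ l' * Sd)) * 1 * ((1 + Bs) ^ k * r ^ S q)).
            { apply Rmult_le_compat_r; [apply Rmult_le_pos; [apply pow_le; lra|apply pow_le; lra]|]. lra. }
            right. rewrite <- Hrl. ring.
        + unfold U. rewrite (sum_zero _ k).
          * unfold Rdiv. rewrite !Rmult_0_l, Rabs_R0. exact B0.
          * intros p _. rewrite beta_zero1 by lia. unfold Rdiv; ring.
      - unfold Fc. replace (INR (S (pred k))) with (INR k) by (f_equal; lia).
        assert (INR k <= INR (S k)) by (apply le_INR; lia).
        assert (0 <= INR (S k) * ((1 + A) ^ k * (1 + Bs) ^ k * (Ch * r ^ L * Sd))).
        { repeat apply Rmult_le_pos; try apply pos_INR; try (apply pow_le; lra); auto. }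
        apply Rle_trans with (INR (S k) * (INR (S k) * ((1 + A) ^ k * (1 + Bs) ^ k * (Ch * r ^ L * Sd)))).
        + apply Rmult_le_compat_r; auto.
        + right; ring. }
    unfold V.
    assert (Hd' : Rabs (U (k - L) t) <= Rabs (U (k - L) t + Rm) + Rabs Rm).
    { replace (U (k - L) t) with ((U (k - L) t + Rm) + - Rm) at 1 by ring.
      eapply Rle_trans; [apply Rabs_triang|]. rewrite Rabs_Ropp. lra. }
    replace ((1 + Fc * Ch) * r ^ L * Sd) with (r ^ L * Sd + Fc * Ch * r ^ L * Sd) by ring. lra. }
  intros p. set (a := fun p => beta (k - L) p / INR (fact p) * r ^ p).
  destruct (le_lt_dec p L) as [HpL|HpL].
  - assert (Ha : Rabs (a p) <= Lam * V).
    { apply (HLamP L HL a (xs L) V); [ | | | exact HpL].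
      - intros i Hi; apply Hxs; auto.
      - intros i Hi; apply Hgap; auto.
      - intros i Hi. rewrite <- (E_ext L k) by (auto; intros p' Hp'; unfold a; rewrite beta_zero2 by lia; unfold Rdiv; ring).
        eapply Rle_trans; [|apply (HUi i Hi)]. right. f_equal. unfold E, U, a.
        apply sum_eq; intros p' _. rewrite Rpow_mult_distr. ring. }
    unfold a in Ha. unfold Rdiv in Ha. rewrite !Rabs_mult in Ha.
    pose proof (inv_fact_le p) as [F1 F2].
    rewrite (Rabs_right (/ INR (fact p))) in Ha by lra.
    rewrite (Rabs_right (r ^ p)) in Ha by (apply Rle_ge, pow_le; lra).
    assert (Hf : 1 <= INR (fact p) <= INR (fact k)).
    { split; [apply (le_INR 1); apply lt_O_fact|apply le_INR, fact_le; lia]. }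
    assert (Hb : Rabs (beta (k - L) p) * r ^ p <= INR (fact p) * (Lam * V)).
    { replace (Rabs (beta (k - L) p) * r ^ p) with (INR (fact p) * (Rabs (beta (k - L) p) * / INR (fact p) * r ^ p))
        by (field; lra).
      apply Rmult_le_compat_l; lra. }
    eapply Rle_trans; [exact Hb|]. unfold Nc, V.
    assert (0 <= Lam * V) by (apply Rmult_le_pos; auto).
    apply Rle_trans with (INR (fact k) * (Lam * V)); [apply Rmult_le_compat_r; lra|].
    right; unfold V; ring.
  - rewrite beta_zero2 by lia. rewrite Rabs_R0, Rmult_0_l.
    unfold Nc. repeat apply Rmult_le_pos; try nra; try apply pos_INR; try (apply pow_le; lra); auto.
Qed.

Fixpoint Cs (n : nat) : R := match n with O => Nc | S n => Cs n + Nc * (1 + Fc * Cs n) end.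

Lemma Fc_pos : 0 <= Fc.
Proof. unfold Fc. repeat apply Rmult_le_pos; try apply pos_INR; apply pow_le; lra. Qed.
Lemma Nc_pos : 0 <= Nc.
Proof. unfold Nc. apply Rmult_le_pos; auto. apply pos_INR. Qed.

Lemma Cs_pos n : 0 <= Cs n.
Proof.
  pose proof Fc_pos. pose proof Nc_pos.
  induction n as [|n IH]; simpl; auto. assert (0 <= Fc * Cs n) by (apply Rmult_le_pos; auto).
  assert (0 <= Nc * (1 + Fc * Cs n)) by (apply Rmult_le_pos; lra). lra.
Qed.

Lemma Plev_mono l Ch Ch' : Ch <= Ch' -> Plev l Ch -> Plev l Ch'.
Proof.
  intros H HP p. eapply Rle_trans; [apply HP|]. apply Rmult_le_compat_r; [auto|].
  apply Rmult_le_compat_r; [apply pow_le; lra|auto].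
Qed.

Lemma levels l : (l <= k)%nat -> forall l', (l' <= l)%nat -> Plev l' (Cs l).
Proof.
  induction l as [|l IH]; intros Hl l' Hl'.
  - replace l' with 0%nat by lia. simpl.
    eapply Plev_mono; [|apply (step 0 0); [lia|lra|intros; lia]]. right; ring.
  - pose proof (Cs_pos l) as HC. pose proof Fc_pos. pose proof Nc_pos.
    assert (Hle : Cs l <= Cs (S l)).
    { simpl. assert (0 <= Fc * Cs l) by (apply Rmult_le_pos; auto).
      assert (0 <= Nc * (1 + Fc * Cs l)) by (apply Rmult_le_pos; lra). lra. }
    destruct (Nat.eq_dec l' (S l)) as [->|Hne].
    + eapply Plev_mono; [|apply (step (S l) (Cs l)); auto].
      * simpl. lra.
      * intros l'' Hl''. apply IH; lia.
    + eapply Plev_mono; [exact Hle|]. apply IH; lia.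
Qed.

Lemma beta_bound j p : (j <= k)%nat -> Rabs (beta j p) * r ^ p <= Cs k * r ^ (k - j) * Sd.
Proof.
  intros Hj. pose proof (levels k (le_n k) (k - j) ltac:(lia) p) as H.
  replace (k - (k - j))%nat with j in H by lia. exact H.
Qed.

Lemma beta_H H j p : r <= H -> Rabs (beta j p) * H ^ (j + p) <= Cs k * H ^ k * Sd.
Proof.
  intros HrH. assert (HC : 0 <= Cs k * H ^ k * Sd).
  { apply Rmult_le_pos; [apply Rmult_le_pos; [apply Cs_pos|apply pow_le; lra]|auto]. }
  destruct (le_lt_dec j k) as [Hj|Hj]; [|rewrite beta_zero1, Rabs_R0, Rmult_0_l by auto; auto].
  destruct (le_lt_dec p (k - j)) as [Hp|Hp]; [|rewrite beta_zero2, Rabs_R0, Rmult_0_l by auto; auto].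
  pose proof (beta_bound j p Hj) as Hb.
  replace (r ^ (k - j)) with (r ^ p * r ^ (k - j - p)) in Hb by (rewrite <- pow_add; f_equal; lia).
  assert (Hrp : 0 < r ^ p) by (apply pow_lt; lra).
  assert (Hb' : Rabs (beta j p) <= Cs k * r ^ (k - j - p) * Sd).
  { apply (Rmult_le_reg_r (r ^ p)); auto. replace (Cs k * r ^ (k - j - p) * Sd * r ^ p) with
      (Cs k * (r ^ p * r ^ (k - j - p)) * Sd) by ring. exact Hb. }
  assert (Hrr : r ^ (k - j - p) <= H ^ (k - j - p)) by (apply pow_incr; lra).
  assert (0 <= H ^ (j + p)) by (apply pow_le; lra).
  apply Rle_trans with (Cs k * H ^ (k - j - p) * Sd * H ^ (j + p)).
  - apply Rmult_le_compat_r; auto. eapply Rle_trans; [exact Hb'|].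
    apply Rmult_le_compat_r; auto. apply Rmult_le_compat_l; [apply Cs_pos|auto].
  - right. replace (H ^ k) with (H ^ (k - j - p) * H ^ (j + p)) by (rewrite <- pow_add; f_equal; lia). ring.
Qed.

End Core.

Lemma double_sum_bound k (b : nat -> nat -> R) d M H t s :
  0 <= H -> Rabs t <= H -> Rabs s <= H ->
  (forall j p, Rabs (b j p) * H ^ (j + p + d) <= M) ->
  Rabs (sum_f_R0 (fun j => sum_f_R0 (fun p => b j p / INR (fact p) * t ^ p) k / INR (fact j) * s ^ j) k)
    * H ^ d <= INR (S k) * (INR (S k) * M).
Proof.
  intros HH Ht Hs Hb.
  assert (Hd0 : 0 <= H ^ d) by (apply pow_le; lra).
  rewrite <- (Rabs_right (H ^ d)) by lra. rewrite <- Rabs_mult.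
  rewrite Rmult_comm, scal_sum. apply sum_bound. intros j _.
  replace (sum_f_R0 (fun p => b j p / INR (fact p) * t ^ p) k / INR (fact j) * s ^ j * H ^ d) with
    (sum_f_R0 (fun p => b j p / INR (fact p) * t ^ p * (/ INR (fact j) * s ^ j * H ^ d)) k)
    by (rewrite <- scal_sum; unfold Rdiv; ring).
  apply sum_bound. intros p _.
  pose proof (inv_fact_le p) as [F1 F2]. pose proof (inv_fact_le j) as [G1 G2].
  unfold Rdiv. rewrite !Rabs_mult, <- !RPow_abs. rewrite (Rabs_right (/ INR (fact p))), (Rabs_right (/ INR (fact j))) by lra. rewrite (Rabs_right H) by lra.
  assert (T1 : Rabs t ^ p <= H ^ p) by (apply pow_incr; split; [apply Rabs_pos|auto]).
  assert (T2 : Rabs s ^ j <= H ^ j) by (apply pow_incr; split; [apply Rabs_pos|auto]).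
  assert (0 <= Rabs t ^ p) by (apply pow_le, Rabs_pos).
  assert (0 <= Rabs s ^ j) by (apply pow_le, Rabs_pos).
  assert (0 <= Rabs (b j p)) by apply Rabs_pos.
  eapply Rle_trans; [|apply (Hb j p)].
  replace (H ^ (j + p + d)) with (H ^ p * H ^ j * H ^ d) by (rewrite <- !pow_add; f_equal; lia).
  replace (Rabs (b j p) * / INR (fact p) * Rabs t ^ p * (/ INR (fact j) * Rabs s ^ j * H ^ d)) with
    ((Rabs (b j p) * / INR (fact p) * / INR (fact j)) * (Rabs t ^ p * Rabs s ^ j) * H ^ d) by ring.
  replace (Rabs (b j p) * (H ^ p * H ^ j * H ^ d)) with ((Rabs (b j p) * 1 * 1) * (H ^ p * H ^ j) * H ^ d) by ring.
  apply Rmult_le_compat_r; auto.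
  apply Rmult_le_compat.
  - apply Rmult_le_pos; [apply Rmult_le_pos|]; lra.
  - apply Rmult_le_pos; auto.
  - apply Rmult_le_compat; try apply Rmult_le_pos; try lra. apply Rmult_le_compat_l; lra.
  - apply Rmult_le_compat; auto.
Qed.


Lemma fmax_ge n f i : (i <= n)%nat -> f i <= fmax n f.
Proof.
  induction n as [|n IH]; intros Hi; simpl.
  - replace i with 0%nat by lia. lra.
  - destruct (Nat.eq_dec i (S n)) as [->|Hne]; [apply Rmax_r|].
    eapply Rle_trans; [apply IH; lia|apply Rmax_l].
Qed.

Lemma sum_nonneg (f : nat -> R) n : (forall i, (i <= n)%nat -> 0 <= f i) -> 0 <= sum_f_R0 f n.
Proof.
  induction n as [|n IH]; intros H; simpl; [apply H; lia|].
  pose proof (IH (fun i Hi => H i ltac:(lia))). pose proof (H (S n) (le_n _)). lra.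
Qed.

Lemma sum_ge_term (f : nat -> R) n j : (forall i, (i <= n)%nat -> 0 <= f i) -> (j <= n)%nat ->
  f j <= sum_f_R0 f n.
Proof.
  intros H Hj. induction n as [|n IH]; simpl.
  - replace j with 0%nat by lia. lra.
  - destruct (Nat.eq_dec j (S n)) as [->|Hne].
    + assert (0 <= sum_f_R0 f n) by (apply sum_nonneg; intros; apply H; lia). lra.
    + pose proof (IH (fun i Hi => H i ltac:(lia)) ltac:(lia)). pose proof (H (S n) (le_n _)). lra.
Qed.

Lemma ortho_cols e1 e2 n1 n2 : e1 * e1 + e2 * e2 = 1 -> n1 * n1 + n2 * n2 = 1 -> e1 * n1 + e2 * n2 = 0 ->
  e1 * e1 + n1 * n1 = 1 /\ e2 * e2 + n2 * n2 = 1 /\ e1 * e2 + n1 * n2 = 0.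
Proof.
  intros He Hn Hen. set (D := e1 * n2 - e2 * n1).
  assert (Hn1 : n1 = - e2 * D).
  { transitivity (n1 * (e1 * e1 + e2 * e2)); [rewrite He; ring|].
    transitivity (e1 * (e1 * n1 + e2 * n2) - e2 * D); [unfold D; ring|]. rewrite Hen. ring. }
  assert (Hn2 : n2 = e1 * D).
  { transitivity (n2 * (e1 * e1 + e2 * e2)); [rewrite He; ring|].
    transitivity (e2 * (e1 * n1 + e2 * n2) + e1 * D); [unfold D; ring|]. rewrite Hen. ring. }
  assert (HD : D * D = 1).
  { rewrite Hn1, Hn2 in Hn. transitivity (D * D * (e1 * e1 + e2 * e2)); [rewrite He; ring|].
    rewrite <- Hn. ring. }
  rewrite Hn1, Hn2. repeat split.
  - transitivity (e1 * e1 + e2 * e2 * (D * D)); [ring|]. rewrite HD. lra.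
  - transitivity (e2 * e2 + e1 * e1 * (D * D)); [ring|]. rewrite HD. lra.
  - transitivity (e1 * e2 * (1 - D * D)); [ring|]. rewrite HD. ring.
Qed.

Lemma sqrt_sum_le a b : sqrt (a ^ 2 + b ^ 2) <= Rabs a + Rabs b.
Proof.
  rewrite <- (sqrt_square (Rabs a + Rabs b)) by (pose proof (Rabs_pos a); pose proof (Rabs_pos b); lra).
  apply sqrt_le_1_alt.
  replace (a ^ 2) with (Rabs a * Rabs a) by (rewrite <- Rabs_mult; simpl; rewrite Rmult_1_r; apply Rabs_right; nra).
  replace (b ^ 2) with (Rabs b * Rabs b) by (rewrite <- Rabs_mult; simpl; rewrite Rmult_1_r; apply Rabs_right; nra).
  pose proof (Rabs_pos a); pose proof (Rabs_pos b). nra.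
Qed.

Theorem lemma3p1 :
  forall (g1 g2 : R -> R), smooth_closed_curve g1 g2 ->
  forall (k : nat), (1 <= k)%nat ->
  forall (sigma : R),
  exists C h0 : R, 0 < C /\ 0 < h0 /\
  forall (a b c : pt),
    nondegenerate a b c -> shape_reg sigma a b c -> diamT a b c <= h0 ->
  forall (y z : pt),
    y <> z -> on_curve g1 g2 y -> on_curve g1 g2 z ->
    on_bdry a b c y -> on_bdry a b c z ->
    (forall x, on_curve g1 g2 x -> on_bdry a b c x -> x = y \/ x = z) ->
    ~ same_edge a b c y z ->
  forall (eta : pt),
    pnorm eta = 1 -> pdot eta (psub z y) = 0 ->
  forall (g : nat -> nat -> R) (X : nat -> nat -> pt),
    (forall l, (l <= k)%nat -> GL_nodes l (g l)) ->
    (forall l i, (l <= k)%nat -> (i <= l)%nat ->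
        on_curve g1 g2 (X l i) /\ in_tri a b c (X l i) /\
        exists t : R, X l i = padd (GL_point y z (g l i)) (pscale t eta)) ->
  forall (v : poly2), deg_le k v ->
  let hT := diamT a b c in
  let rT := pdist y z in
  let S := sum_f_R0 (fun l =>
             / rT ^ l * fmax l (fun i => Rabs (peval k (pdirn (k - l) eta v) (X l i)))) k in
  forall p : pt, in_tri a b c p ->
    Rabs (peval k v p) <= C * hT ^ k * S /\
    hT * gradnorm k v p <= C * hT ^ k * S.
Proof.
  intros g1 g2 Hc k Hk sigma.
  destruct (curve_geom g1 g2 Hc) as [h0 [Bc [Hh0 [Hh01 [HBc Hgeom]]]]].
  destruct (GL_unif_upto k) as [G [dg [Hdg [HG HGL]]]].
  set (A := (1 + G) / 2).
  destruct (coef_bound_upto k A (dg / 2) ltac:(lra)) as [Lam [HLam HLb]].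
  set (Bs := 2 * Bc).
  set (Cst := Cs k A Bs Lam k).
  assert (HCst : 0 <= Cst) by (apply Cs_pos; unfold A, Bs; lra).
  set (C := 2 * (INR (S k) * (INR (S k) * Cst)) * 2 ^ k + 1).
  assert (HC0 : 0 <= 2 * (INR (S k) * (INR (S k) * Cst)) * 2 ^ k).
  { repeat apply Rmult_le_pos; try lra; try apply pos_INR; auto. apply pow_le; lra. }
  exists C, h0. split; [unfold C; lra|]. split; [auto|].
  intros a b c HD Hsr Hh y z Hyz Hy Hz Hyb Hzb Hbd Hse eta Heta Hez g X HGLn HX v Hv hT rT Sv p Hp.
  assert (Hk0 : (0 < k)%nat) by lia.
  assert (HyT : in_tri a b c y) by (apply bdry_in_tri; auto).
  assert (HzT : in_tri a b c z) by (apply bdry_in_tri; auto).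
  assert (HhT : 0 <= hT) by (eapply Rle_trans; [apply sqrt_pos|apply Rmax_l]).
  set (d1 := fst z - fst y). set (d2 := snd z - snd y).
  assert (Hr2 : rT * rT = d1 * d1 + d2 * d2).
  { unfold rT, pdist, pnorm, pdot, psub, d1, d2. simpl. rewrite sqrt_sqrt; [ring|]. pose proof (Rle_0_sqr (fst y - fst z)); pose proof (Rle_0_sqr (snd y - snd z)); unfold Rsqr in *; lra. }
  assert (Hr0 : 0 < rT).
  { assert (0 <= rT) by apply sqrt_pos. destruct (Rle_lt_or_eq_dec _ _ H) as [?|E]; auto.
    exfalso. apply Hyz. rewrite <- E in Hr2.
    assert (d1 = 0) by nra. assert (d2 = 0) by nra. unfold d1, d2 in *.
    destruct y, z; simpl in *; f_equal; lra. }
  assert (HrT : rT <= 2 * hT).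
  { destruct (tri_coord_bound a b c z y HzT HyT) as [T1 T2]. fold hT d1 d2 in T1, T2.
    pose proof (sq_le _ _ T1). pose proof (sq_le _ _ T2).
    apply Rsqr_incr_0_var; [unfold Rsqr; nra|lra]. }
  assert (HhT1 : hT <= 1) by (unfold hT; lra).
  assert (Hee : fst eta * fst eta + snd eta * snd eta = 1).
  { unfold pnorm, pdot in Heta. rewrite <- (sqrt_sqrt (fst eta * fst eta + snd eta * snd eta)) by nra.
    rewrite Heta. ring. }
  set (e := pscale (/ rT) (psub z y)).
  assert (Hep : fst e * fst e + snd e * snd e = 1).
  { unfold e, pscale, psub; simpl. fold d1 d2. field_simplify_eq; [|lra]. lra. }
  assert (Hen : fst e * fst eta + snd e * snd eta = 0).
  { unfold pdot, psub in Hez; simpl in Hez. unfold e, pscale, psub; simpl. fold d1 d2 in Hez |- *.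
    transitivity (/ rT * (fst eta * d1 + snd eta * d2)); [ring|]. rewrite Hez. ring. }
  destruct (ortho_cols _ _ _ _ Hep Hee Hen) as [Oc1 [Oc2 Oc3]].
  assert (Hbnd : forall x1 x2, x1 * x1 + x2 * x2 = 1 -> Rabs x1 <= 1 /\ Rabs x2 <= 1).
  { intros x1 x2 Hx. split; apply Rabs_le; split; nra. }
  destruct (Hbnd _ _ Hee) as [He1 He2]. destruct (Hbnd _ _ Hep) as [Hf1 Hf2].
  set (xs := fun l i => (1 + g l i) / 2).
  set (ss := fun l i => pdot eta (psub (X l i) y)).
  assert (HXrep : forall l i, (l <= k)%nat -> (i <= l)%nat ->
    X l i = padd (padd y (pscale (xs l i * rT) e)) (pscale (ss l i) eta)).
  { intros l i Hl Hi. destruct (HX l i Hl Hi) as [_ [_ [t Ht]]].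
    assert (Hs : ss l i = t).
    { unfold ss. rewrite Ht. unfold pdot, psub in Hez |- *. unfold GL_point, padd, pscale, psub. simpl in *.
      transitivity ((1 + g l i) / 2 * (fst eta * (fst z - fst y) + snd eta * (snd z - snd y)) +
                    t * (fst eta * fst eta + snd eta * snd eta)); [ring|]. rewrite Hez, Hee. ring. }
    rewrite Hs, Ht. unfold xs, e, GL_point, padd, pscale, psub. simpl. f_equal; field; lra. }
  assert (HS0 : forall l, (l <= k)%nat -> 0 <= / rT ^ l * fmax l (fun i => Rabs (peval k (pdirn (k - l) eta v) (X l i)))).
  { intros l _. apply Rmult_le_pos.
    - apply Rlt_le, Rinv_0_lt_compat, pow_lt; lra.
    - eapply Rle_trans; [apply Rabs_pos|apply (fmax_ge l (fun i => Rabs (peval k (pdirn (k - l) eta v) (X l i))) 0%nat); lia]. }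
  assert (HS : 0 <= Sv) by (apply sum_nonneg; auto).
  assert (Hdata : forall l i, (l <= k)%nat -> (i <= l)%nat ->
    Rabs (peval k (pdirn (k - l) eta v) (padd (padd y (pscale (xs l i * rT) e)) (pscale (ss l i) eta)))
      <= rT ^ l * Sv).
  { intros l i Hl Hi. rewrite <- HXrep by auto.
    pose proof (sum_ge_term _ k l HS0 Hl) as Ht. fold Sv in Ht.
    pose proof (fmax_ge l (fun i => Rabs (peval k (pdirn (k - l) eta v) (X l i))) i Hi) as Hf. simpl in Hf.
    assert (Hrl : 0 < rT ^ l) by (apply pow_lt; lra).
    replace (Rabs (peval k (pdirn (k - l) eta v) (X l i))) with
      (rT ^ l * (/ rT ^ l * Rabs (peval k (pdirn (k - l) eta v) (X l i)))) by (field; lra).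
    apply Rmult_le_compat_l; [lra|]. eapply Rle_trans; [|exact Ht].
    apply Rmult_le_compat_l; [apply Rlt_le, Rinv_0_lt_compat; lra|exact Hf]. }
  assert (HA : 0 <= A) by (unfold A; lra).
  assert (HBs : 0 <= Bs) by (unfold Bs; lra).
  assert (Hxs : forall l i, (l <= k)%nat -> (i <= l)%nat -> Rabs (xs l i) <= A).
  { intros l i Hl Hi. destruct (HGL l Hl (g l) (HGLn l Hl)) as [H1 _].
    pose proof (Rabs_le_inv _ _ (H1 i Hi)). unfold xs, A. apply Rabs_le. lra. }
  assert (Hgap : forall l i, (l <= k)%nat -> (i < l)%nat -> xs l i + dg / 2 <= xs l (S i)).
  { intros l i Hl Hi. destruct (HGL l Hl (g l) (HGLn l Hl)) as [_ H2].
    pose proof (H2 i Hi). unfold xs. lra. }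
  assert (Hss : forall l i, (l <= k)%nat -> (i <= l)%nat -> Rabs (ss l i) <= Bs * rT).
  { intros l i Hl Hi. destruct (HX l i Hl Hi) as [Hc1 [Hc2 _]].
    pose proof (Hgeom a b c HD Hh y z Hyz Hy Hz Hyb Hzb Hbd eta He1 He2 Hez (X l i) Hc1 Hc2) as HG'.
    unfold ss. eapply Rle_trans; [exact HG'|]. unfold Bs. fold rT.
    replace (rT ^ 2) with (rT * rT) by ring.
    assert (rT <= 2) by lra.
    assert (rT * rT <= 2 * rT) by nra. nra. }
  set (H := 2 * hT).
  assert (HbH : forall j q, Rabs (beta k v y e eta j q) * H ^ (j + q) <= Cst * H ^ k * Sv).
  { intros j q. apply (beta_H k v y e eta rT Sv Hk0 Hv Hr0 HS xs ss A Bs (dg / 2) Lam HA HBs HLam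
      Hdata Hxs Hgap Hss HLb). unfold H; lra. }
  assert (HH : 0 <= H) by (unfold H; lra).
  assert (HM : 0 <= Cst * H ^ k * Sv).
  { apply Rmult_le_pos; [apply Rmult_le_pos; [auto|apply pow_le; auto]|auto]. }
  assert (HHk : H ^ k = 2 ^ k * hT ^ k) by (unfold H; apply Rpow_mult_distr).
  assert (HX0 : 0 <= hT ^ k * Sv) by (apply Rmult_le_pos; [apply pow_le|]; auto).
  assert (Hfin : INR (S k) * (INR (S k) * (Cst * H ^ k * Sv)) * 2 <= C * hT ^ k * Sv).
  { rewrite HHk. unfold C.
    replace (INR (S k) * (INR (S k) * (Cst * (2 ^ k * hT ^ k) * Sv)) * 2) with
      (2 * (INR (S k) * (INR (S k) * Cst)) * 2 ^ k * (hT ^ k * Sv)) by ring.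
    replace ((2 * (INR (S k) * (INR (S k) * Cst)) * 2 ^ k + 1) * hT ^ k * Sv) with
      ((2 * (INR (S k) * (INR (S k) * Cst)) * 2 ^ k + 1) * (hT ^ k * Sv)) by ring.
    apply Rmult_le_compat_r; [auto|lra]. }
  remember (pdot e (psub p y)) as t eqn:Et.
  remember (pdot eta (psub p y)) as s eqn:Es.
  destruct (tri_coord_bound a b c p y Hp HyT) as [Tw1 Tw2]. fold hT in Tw1, Tw2.
  assert (Ht : Rabs t <= H).
  { rewrite Et. unfold pdot, psub, H. simpl. replace (2 * hT) with (2 * 1 * hT) by ring.
    apply dot_bound; auto. }
  assert (Hs : Rabs s <= H).
  { rewrite Es. unfold pdot, psub, H. simpl. replace (2 * hT) with (2 * 1 * hT) by ring.
    apply dot_bound; auto. }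
  clearbody e.
  assert (Hprep : p = padd (padd y (pscale t e)) (pscale s eta)).
  { rewrite Et, Es. unfold pdot, psub, padd, pscale. destruct p as [p1 p2]. simpl.
    f_equal.
    - transitivity (fst y + ((p1 - fst y) * (fst e * fst e + fst eta * fst eta) +
                     (p2 - snd y) * (fst e * snd e + fst eta * snd eta))); [rewrite Oc1, Oc3; ring|ring].
    - transitivity (snd y + ((p1 - fst y) * (fst e * snd e + fst eta * snd eta) +
                     (p2 - snd y) * (snd e * snd e + snd eta * snd eta))); [rewrite Oc2, Oc3; ring|ring]. }
  split.
  - rewrite Hprep. rewrite expand_gen by auto.
    pose proof (double_sum_bound k (beta k v y e eta) 0 (Cst * H ^ k * Sv) H t s HH Ht Hs) as D.
    unfold beta in D. simpl pow in D. rewrite Rmult_1_r in D.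
    assert (D' := D (fun j q => eq_ind _ (fun n => Rabs _ * H ^ n <= _) (HbH j q) _ (eq_sym (Nat.add_0_r _)))).
    eapply Rle_trans; [exact D'|].
    assert (0 <= INR (S k) * (INR (S k) * (Cst * H ^ k * Sv))) by (apply Rmult_le_pos; [apply pos_INR|apply Rmult_le_pos; [apply pos_INR|auto]]).
    lra.
  - assert (Hde : deg_le k (pdir e v)) by exact (deg_pdirn_k k e v Hv 1).
    assert (Hdn : deg_le k (pdir eta v)) by exact (deg_pdirn_k k eta v Hv 1).
    assert (EDe : peval k (pdir e v) p = sum_f_R0 (fun j => sum_f_R0 (fun q =>
        beta k v y e eta j (S q) / INR (fact q) * t ^ q) k / INR (fact j) * s ^ j) k).
    { rewrite Hprep at 1. rewrite expand_gen by auto. apply sum_eq; intros j _.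
      apply (f_equal (fun x => x / INR (fact j) * s ^ j)). apply sum_eq; intros q _.
      unfold beta. rewrite pdirn_comm, pdirn_Sr. reflexivity. }
    assert (EDn : peval k (pdir eta v) p = sum_f_R0 (fun j => sum_f_R0 (fun q =>
        beta k v y e eta (S j) q / INR (fact q) * t ^ q) k / INR (fact j) * s ^ j) k).
    { rewrite Hprep at 1. rewrite expand_gen by auto. apply sum_eq; intros j _.
      apply (f_equal (fun x => x / INR (fact j) * s ^ j)). apply sum_eq; intros q _.
      unfold beta. rewrite pdirn_Sr. reflexivity. }
    pose proof (double_sum_bound k (fun j q => beta k v y e eta j (S q)) 1 (Cst * H ^ k * Sv) H t s HH Ht Hs) as D1.
    pose proof (double_sum_bound k (fun j q => beta k v y e eta (S j) q) 1 (Cst * H ^ k * Sv) H t s HH Ht Hs) as D2.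
    cbv beta in D1, D2. rewrite <- EDe in D1. rewrite <- EDn in D2.
    assert (D1' : Rabs (peval k (pdir e v) p) * H <= INR (S k) * (INR (S k) * (Cst * H ^ k * Sv))).
    { assert (D := D1 (fun j q => eq_ind _ (fun n => Rabs _ * H ^ n <= _) (HbH j (S q)) (j + q + 1)%nat (ltac:(lia) : (j + S q = j + q + 1)%nat))).
      rewrite pow_1 in D. exact D. }
    assert (D2' : Rabs (peval k (pdir eta v) p) * H <= INR (S k) * (INR (S k) * (Cst * H ^ k * Sv))).
    { assert (D := D2 (fun j q => eq_ind _ (fun n => Rabs _ * H ^ n <= _) (HbH (S j) q) (j + q + 1)%nat (ltac:(lia) : (S j + q = j + q + 1)%nat))).
      rewrite pow_1 in D. exact D. }
    rewrite !peval_pdir in D1', D2'.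
    assert (Hg : gradnorm k v p <= Rabs (fst e * peval k (pdx v) p + snd e * peval k (pdy v) p) +
                                   Rabs (fst eta * peval k (pdx v) p + snd eta * peval k (pdy v) p)).
    { unfold gradnorm. eapply Rle_trans; [|apply sqrt_sum_le]. right. f_equal.
      set (vx := peval k (pdx v) p). set (vy := peval k (pdy v) p).
      transitivity (vx ^ 2 * (fst e * fst e + fst eta * fst eta) + vy ^ 2 * (snd e * snd e + snd eta * snd eta)
                    + 2 * vx * vy * (fst e * snd e + fst eta * snd eta)).
      + rewrite Oc1, Oc2, Oc3. ring.
      + ring. }
    assert (0 <= Rabs (fst e * peval k (pdx v) p + snd e * peval k (pdy v) p)) by apply Rabs_pos.
    assert (0 <= Rabs (fst eta * peval k (pdx v) p + snd eta * peval k (pdy v) p)) by apply Rabs_pos.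
    apply Rle_trans with (H * (Rabs (fst e * peval k (pdx v) p + snd e * peval k (pdy v) p) +
                                Rabs (fst eta * peval k (pdx v) p + snd eta * peval k (pdy v) p))).
    + apply Rmult_le_compat; auto; [apply sqrt_pos|unfold H; lra].
    + lra.
Qed.
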